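(* (a) The set $D(h)$ is uncountable, perfect, nowhere dense, has Lebesgue measure zero, and is a self-similar fractal whose Hausdorff dimension $\alpha_0$ is the solution of $$\sum_{p\in\{1,2,\ldots,q-1\},\,p\ne u}\left(\frac1q\right)^{p\alpha_0}=1.$$ (b) The set $E(h)=\{\Delta^{-q}_{\alpha_1\alpha_2\ldots}:\alpha_n\in\Theta\}$ is a self-similar fractal with Hausdorff dimension $\log_q|\Theta|$. (c) Consequently $h$ does not preserve Hausdorff dimension: $\dim_H D(h)\ne\dim_H E(h)$.
   Context: Let $q>3$ be an integer, fix $u\in\{0,1,\ldots,q-1\}$, and put $\Theta=\{1,2,\ldots,q-1\}\setminus\{u\}$. The nega-$q$-ary representation is $\Delta^{-q}_{\beta_1\beta_2\ldots}=\sum_{k\ge1}\frac{\beta_k}{(-q)^k}$, $\beta_k\in\{0,\ldots,q-1\}$. For a sequence $(\alpha_n)_{n\ge1}$ with $\alpha_n\in\Theta$, let $x((\alpha_n))$ be the number whose nega-$q$-ary digit string is the concatenation of the blocks $\underbrace{u\ldots u}_{\alpha_n-1}\alpha_n$ ($\alpha_n-1$ copies of $u$ followed by the digit $\alpha_n$), $n=1,2,\ldots$; equivalently $x=-\frac{u}{q+1}+\sum_{n\ge1}\frac{\alpha_n-u}{(-q)^{\alpha_1+\cdots+\alpha_n}}$. Let $D(h)$ be the set of all such $x$, and define $h:D(h)\to\mathbb R$ by $h(x)=\Delta^{-q}_{\alpha_1\alpha_2\ldots}=\sum_{n\ge1}\frac{\alpha_n}{(-q)^n}$. $E(h)$ denotes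 the range of $h$ and $|\Theta|$ the number of elements of $\Theta$. *)

(* Defs.v *)
From Stdlib Require Import Reals Lra Lia Arith List.
Open Scope R_scope.

(* Nega-q-ary value: digits beta 1, beta 2, ... (beta 0 is ignored).
   nega q beta x  <->  x = sum_{k>=1} beta_k / (-q)^k. *)
Definition nega (q : nat) (beta : nat -> nat) (x : R) : Prop :=
  infinite_sum (fun k => INR (beta (S k)) / (- INR q) ^ (S k)) x.

Definition in_Theta (q u p : nat) : Prop := (1 <= p <= q - 1)%nat /\ p <> u.
Definition Theta_seq (q u : nat) (alpha : nat -> nat) : Prop :=
  forall n, (1 <= n)%nat -> in_Theta q u (alpha n).

Definition card_Theta (q u : nat) : nat :=
  length (filter (fun p => negb (Nat.eqb p u)) (seq 1 (q - 1))).

Fixpoint blk_end (alpha : nat -> nat) (n : nat) : nat :=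
  match n with
  | O => O
  | S m => (blk_end alpha m + alpha (S m))%nat
  end.

(* beta is the concatenation of the blocks u...u alpha_n (alpha_n - 1 copies of u) *)
Definition is_concat (u : nat) (alpha beta : nat -> nat) : Prop :=
  forall k, (1 <= k)%nat ->
    (forall n, (1 <= n)%nat -> k = blk_end alpha n -> beta k = alpha n) /\
    ((forall n, (1 <= n)%nat -> k <> blk_end alpha n) -> beta k = u).

Definition Dh (q u : nat) (x : R) : Prop :=
  exists alpha beta, Theta_seq q u alpha /\ is_concat u alpha beta /\ nega q beta x.

(* E(h) = range of h *)
Definition Eh (q u : nat) (y : R) : Prop :=
  exists alpha, Theta_seq q u alpha /\ nega q alpha y.

Definition uncountable (A : R -> Prop) : Prop :=
  ~ exists f : nat -> R, forall x, A x -> exists n, f n = x.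

Definition closed_set (A : R -> Prop) : Prop :=
  forall x, (forall eps, 0 < eps -> exists y, A y /\ Rabs (y - x) < eps) -> A x.

Definition perfect (A : R -> Prop) : Prop :=
  closed_set A /\
  forall x, A x -> forall eps, 0 < eps -> exists y, A y /\ y <> x /\ Rabs (y - x) < eps.

(* interior of the closure is empty: every nonempty open interval contains a
   nonempty open interval that avoids the closure of A *)
Definition nowhere_dense (A : R -> Prop) : Prop :=
  forall a b, a < b -> exists c d, a <= c /\ c < d /\ d <= b /\
    forall x, c < x < d -> exists eps, 0 < eps /\ forall y, A y -> eps <= Rabs (y - x).

Definition leb_null (A : R -> Prop) : Prop :=
  forall eps, 0 < eps -> exists a b : nat -> R,
    (forall n, a n <= b n) /\
    (forall x, A x -> exists n, a n <= x <= b n) /\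
    (forall N, sum_f_R0 (fun n => b n - a n) N < eps).

(* l^s for l >= 0, s > 0, with 0^s = 0 *)
Definition pw (l s : R) : R := if Rle_dec l 0 then 0 else Rpower l s.

(* s-dimensional Hausdorff measure is zero (covers of subsets of R by closed
   intervals; every set of diameter d lies in a closed interval of length d) *)
Definition H_null (s : R) (A : R -> Prop) : Prop :=
  forall eps, 0 < eps -> exists a b : nat -> R,
    (forall n, a n <= b n) /\
    (forall x, A x -> exists n, a n <= x <= b n) /\
    (forall N, sum_f_R0 (fun n => pw (b n - a n) s) N < eps).

Definition H_infinite (s : R) (A : R -> Prop) : Prop :=
  forall M, exists delta, 0 < delta /\ forall a b : nat -> R,
    (forall n, a n <= b n <= a n + delta) ->
    (forall x, A x -> exists n, a n <= x <= b n) ->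
    exists N, M <= sum_f_R0 (fun n => pw (b n - a n) s) N.

Definition hausdorff_dim (A : R -> Prop) (d : R) : Prop :=
  0 <= d /\
  (forall s, d < s -> H_null s A) /\
  (forall s, 0 < s < d -> H_infinite s A).

Definition self_similar (A : R -> Prop) : Prop :=
  (exists x, A x) /\ closed_set A /\ (exists M, forall x, A x -> Rabs x <= M) /\
  exists rs : list (R * R), rs <> nil /\
    (forall p, In p rs -> 0 < Rabs (fst p) < 1) /\
    (forall x, A x <-> exists p y, In p rs /\ A y /\ x = fst p * y + snd p).

Definition dim_eq (q u : nat) (a : R) : Prop :=
  sum_f 1 (q - 1) (fun p => if Nat.eqb p u then 0 else Rpower (1 / INR q) (INR p * a)) = 1.

(* Main.v *)
Require Import Defs.
From Stdlib Require Import Reals Lra Lia ZArith List Classical ClassicalEpsilon FunctionalExtensionality PropExtensionality.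
Open Scope R_scope.
Import ListNotations.

Lemma Un_cv_le_bound (u : nat -> R) (L c e : R) (j : nat) :
  Un_cv u L -> (forall n, (j <= n)%nat -> Rabs (u n - c) <= e) -> Rabs (L - c) <= e.
Proof.
  intros Hu Hb. destruct (Rle_dec (Rabs (L - c)) e) as [h|h]; auto.
  exfalso. assert (Hp : Rabs (L - c) - e > 0) by lra.
  destruct (Hu _ Hp) as [N HN].
  specialize (HN (max N j) (Nat.le_max_l _ _)). specialize (Hb (max N j) (Nat.le_max_r _ _)).
  unfold R_dist in HN.
  assert (Rabs (L - c) <= Rabs (u (max N j) - L) + Rabs (u (max N j) - c)).
  { replace (L - c) with (-(u (max N j) - L) + (u (max N j) - c)) by ring.
    eapply Rle_trans; [apply Rabs_triang|]. rewrite Rabs_Ropp. lra. }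
  lra.
Qed.

Lemma lim_zero_pow (x : R) (K e : R) : 0 <= x < 1 -> 0 < e -> exists N, forall n, (N <= n)%nat -> K * x ^ n < e.
Proof.
  intros Hx He.
  destruct (Rle_dec K 0) as [hK|hK].
  - exists 0%nat. intros n _. assert (0 <= x ^ n) by (apply pow_le; lra). nra.
  - assert (Rabs x < 1) by (rewrite Rabs_pos_eq; lra).
    destruct (pow_lt_1_zero x H (e / K)) as [N HN].
    { apply Rdiv_lt_0_compat; lra. }
    exists N. intros n Hn. specialize (HN n Hn).
    rewrite Rabs_pos_eq in HN by (apply pow_le; lra).
    apply (Rmult_lt_compat_l K) in HN; [|lra].
    replace (K * (e / K)) with e in HN by (field; lra). lra.
Qed.

Lemma zero_of_small (z K x : R) : 0 <= x < 1 -> (forall n, Rabs z <= K * x ^ n) -> z = 0.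
Proof.
  intros Hx H. destruct (Req_dec z 0) as [h|h]; auto.
  assert (Hz : 0 < Rabs z) by (apply Rabs_pos_lt; auto).
  destruct (lim_zero_pow x K (Rabs z) Hx Hz) as [N HN].
  specialize (HN N (le_n _)). specialize (H N). lra.
Qed.

Fixpoint lsum {T : Type} (f : T -> R) (l : list T) : R :=
  match l with nil => 0 | x :: l' => f x + lsum f l' end.

Lemma lsum_app {T} (f : T -> R) l1 l2 : lsum f (l1 ++ l2) = lsum f l1 + lsum f l2.
Proof. induction l1; simpl; [ring| rewrite IHl1; ring]. Qed.

Lemma lsum_le {T} (f g : T -> R) l : (forall x, In x l -> f x <= g x) -> lsum f l <= lsum g l.
Proof. induction l; simpl; intros H; [lra|]. pose proof (H a (or_introl eq_refl)).
  assert (lsum f l <= lsum g l) by (apply IHl; auto). lra. Qed.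

Lemma lsum_ext {T} (f g : T -> R) l : (forall x, In x l -> f x = g x) -> lsum f l = lsum g l.
Proof. induction l; simpl; intros H; [lra|]. rewrite (H a (or_introl eq_refl)), IHl; auto. Qed.

Lemma lsum_nonneg {T} (f : T -> R) l : (forall x, In x l -> 0 <= f x) -> 0 <= lsum f l.
Proof. induction l; simpl; intros H; [lra|]. pose proof (H a (or_introl eq_refl)).
  assert (0 <= lsum f l) by (apply IHl; auto). lra. Qed.

Lemma lsum_scal {T} (c : R) (f : T -> R) l : lsum (fun x => c * f x) l = c * lsum f l.
Proof. induction l; simpl; [ring| rewrite IHl; ring]. Qed.

Lemma lsum_plus {T} (f g : T -> R) l : lsum (fun x => f x + g x) l = lsum f l + lsum g l.
Proof. induction l; simpl; [ring| rewrite IHl; ring]. Qed.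

Lemma lsum_map {T U} (f : U -> R) (h : T -> U) l : lsum f (map h l) = lsum (fun x => f (h x)) l.
Proof. induction l; simpl; [ring| rewrite IHl; ring]. Qed.

Lemma lsum_flat_map {T U} (f : U -> R) (h : T -> list U) l :
  lsum f (flat_map h l) = lsum (fun x => lsum f (h x)) l.
Proof. induction l; simpl; [ring| rewrite lsum_app, IHl; ring]. Qed.

Lemma lsum_sum_f {T} (F : T -> nat -> R) l N :
  lsum (fun x => sum_f_R0 (F x) N) l = sum_f_R0 (fun n => lsum (fun x => F x n) l) N.
Proof.
  induction N; simpl.
  - reflexivity.
  - rewrite lsum_plus, IHN. reflexivity.
Qed.

Lemma sum_f_seq (f : nat -> R) N : sum_f_R0 f N = lsum f (seq 0 (S N)).
Proof.
  induction N; [simpl; ring|]. rewrite (seq_S (S N)), lsum_app. simpl sum_f_R0. rewrite IHN. simpl. ring.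
Qed.

Lemma lsum_mono_in {T} (f : T -> R) l x : (forall y, In y l -> 0 <= f y) -> In x l -> f x <= lsum f l.
Proof.
  induction l; simpl; intros H Hx; [contradiction|].
  destruct Hx as [<-|Hx].
  - assert (0 <= lsum f l) by (apply lsum_nonneg; auto). lra.
  - assert (0 <= f a) by auto. assert (f x <= lsum f l) by (apply IHl; auto). lra.
Qed.

Lemma sum_f_R0_nonneg (f : nat -> R) N : (forall n, 0 <= f n) -> 0 <= sum_f_R0 f N.
Proof. intros H; induction N; simpl; [auto|]. specialize (H (S N)). lra. Qed.

Lemma sum_f_R0_ge_term (f : nat -> R) N n : (forall m, 0 <= f m) -> (n <= N)%nat -> f n <= sum_f_R0 f N.
Proof.
  intros H Hn. induction N.
  - assert (n = 0%nat) by lia. subst. simpl. lra.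
  - destruct (Nat.eq_dec n (S N)) as [->|hn].
    + simpl. pose proof (sum_f_R0_nonneg f N H). lra.
    + simpl. specialize (H (S N)). assert (f n <= sum_f_R0 f N) by (apply IHN; lia). lra.
Qed.

Lemma sum_f_R0_le (f g : nat -> R) N : (forall n, (n <= N)%nat -> f n <= g n) -> sum_f_R0 f N <= sum_f_R0 g N.
Proof. intros H; induction N; simpl; [apply H; lia|].
  assert (sum_f_R0 f N <= sum_f_R0 g N) by (apply IHN; intros; apply H; lia).
  specialize (H (S N) (le_n _)). lra. Qed.

Definition ind (P : Prop) : R := if excluded_middle_informative P then 1 else 0.
Lemma ind_nonneg P : 0 <= ind P. Proof. unfold ind; destruct excluded_middle_informative; lra. Qed.
Lemma ind_le1 P : ind P <= 1. Proof. unfold ind; destruct excluded_middle_informative; lra. Qed.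
Lemma ind_true (P : Prop) : P -> ind P = 1. Proof. unfold ind; destruct excluded_middle_informative; tauto. Qed.
Lemma ind_false (P : Prop) : ~ P -> ind P = 0. Proof. unfold ind; destruct excluded_middle_informative; tauto. Qed.

Lemma lsum_ind_filter {T} (P : T -> Prop) l :
  exists l', incl l' l /\ (forall x, In x l' -> P x) /\ (NoDup l -> NoDup l') /\ lsum (fun x => ind (P x)) l = INR (length l').
Proof.
  induction l as [|a l IH]; simpl.
  - exists nil. split; [intros x H; inversion H|]. split; [intros x []|]. split; [intros; constructor|reflexivity].
  - destruct IH as [l' [H1 [H2 [H3 H4]]]].
    destruct (classic (P a)) as [h|h].
    + exists (a :: l'). repeat split.
      * intros x [<-|hx]; [left; auto| right; auto].
      * intros x [<-|hx]; auto.
      * intros Hnd. inversion Hnd; subst. constructor; auto.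
      * rewrite ind_true by auto. rewrite H4. simpl length. rewrite S_INR. ring.
    + exists l'. repeat split.
      * intros x hx; right; auto.
      * auto.
      * intros Hnd. inversion Hnd; subst. auto.
      * rewrite ind_false by auto. rewrite H4. ring.
Qed.

Lemma NoDup_map_in {T U} (f : T -> U) l : (forall x y, In x l -> In y l -> f x = f y -> x = y) -> NoDup l -> NoDup (map f l).
Proof.
  induction l; simpl; intros Hi Hn; constructor.
  - intros Hin. apply in_map_iff in Hin as [y [Hy Hyl]].
    inversion Hn; subst. assert (y = a) by (apply Hi; auto). subst; contradiction.
  - inversion Hn; subst. apply IHl; auto.
Qed.

Lemma count_Z (L : list Z) (z1 : Z) (K : nat) : NoDup L ->
  (forall z, In z L -> (Z.abs (z - z1) <= Z.of_nat K)%Z) -> (length L <= 2 * K + 1)%nat.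
Proof.
  intros Hn Hb.
  set (f := fun z => Z.to_nat (z - z1 + Z.of_nat K)).
  assert (Hnd : NoDup (map f L)).
  { apply NoDup_map_in; auto. intros x y hx hy e. unfold f in e.
    pose proof (Hb x hx). pose proof (Hb y hy). apply Z2Nat.inj in e; lia. }
  assert (Hi : incl (map f L) (seq 0 (2 * K + 1))).
  { intros n hn. apply in_map_iff in hn as [z [<- hz]]. apply in_seq. unfold f.
    pose proof (Hb z hz). lia. }
  pose proof (NoDup_incl_length Hnd Hi). rewrite length_map, length_seq in H. lia.
Qed.

Lemma exists_nat_ge (x : R) : exists K : nat, x <= INR K.
Proof.
  destruct (archimed x) as [h1 h2]. exists (Z.to_nat (up x)).
  destruct (Z_lt_le_dec (up x) 0) as [h|h].
  - replace (Z.to_nat (up x)) with 0%nat by lia. simpl. apply IZR_lt in h. lra.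
  - rewrite INR_IZR_INZ, Z2Nat.id by lia. lra.
Qed.

Lemma Rabs_le_inv a b : Rabs a <= b -> - b <= a <= b.
Proof. intros H. pose proof (Rle_abs a). pose proof (Rle_abs (- a)). rewrite Rabs_Ropp in H1. lra. Qed.

Lemma in_firstn_in {T} (x : T) n (v : list T) : In x (firstn n v) -> In x v.
Proof. intros H. rewrite <- (firstn_skipn n v). apply in_or_app. auto. Qed.

Lemma pow_le_one x n : 0 <= x <= 1 -> x ^ n <= 1.
Proof. intros H. induction n; simpl; [lra|]. pose proof (pow_le x n). nra. Qed.

Lemma geo_half' N : sum_f_R0 (fun n => (/ 2) ^ (S n)) N <= 1 - (/ 2) ^ (S N).
Proof. induction N; simpl; [lra|]. simpl in IHN. lra. Qed.

Lemma Hnull_Hinf_false (s : R) (X : R -> Prop) : 0 < s -> H_null s X -> H_infinite s X -> False.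
Proof.
  intros Hs Hn Hi. destruct (Hi 1) as [del [Hdel Hd]].
  set (e := Rmin 1 (exp (s * ln del))).
  assert (He : 0 < e) by (apply Rmin_pos; [lra| apply exp_pos]).
  destruct (Hn e He) as [a [b [Hab [Hcov Hsum]]]].
  assert (Hterm : forall n, pw (b n - a n) s < e).
  { intros n. eapply Rle_lt_trans; [|apply (Hsum n)].
    apply (sum_f_R0_ge_term (fun n => pw (b n - a n) s) n n); [|lia].
    intros m. unfold pw. destruct Rle_dec; [lra|]. unfold Rpower. left; apply exp_pos. }
  destruct (Hd a b) as [N HN]; auto.
  - intros n. split; [apply Hab|]. specialize (Hterm n). specialize (Hab n).
    destruct (Rle_dec (b n - a n) del) as [h|h]; [lra|]. exfalso.
    apply Rnot_le_lt in h.
    unfold pw in Hterm. destruct (Rle_dec (b n - a n) 0); [lra|]. unfold Rpower in Hterm.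
    assert (exp (s * ln del) < exp (s * ln (b n - a n))).
    { apply exp_increasing. apply Rmult_lt_compat_l; auto. apply ln_increasing; lra. }
    assert (e <= exp (s * ln del)) by apply Rmin_r. lra.
  - specialize (Hsum N). assert (e <= 1) by apply Rmin_l. lra.
Qed.

Lemma dim_unique (X : R -> Prop) d1 d2 : hausdorff_dim X d1 -> hausdorff_dim X d2 -> d1 = d2.
Proof.
  intros [H1a [H1b H1c]] [H2a [H2b H2c]].
  destruct (Rtotal_order d1 d2) as [h|[h|h]]; auto; exfalso.
  - apply (Hnull_Hinf_false ((d1 + d2) / 2) X); [lra| apply H1b; lra| apply H2c; lra].
  - apply (Hnull_Hinf_false ((d1 + d2) / 2) X); [lra| apply H2b; lra| apply H1c; lra].
Qed.

Lemma countable_Hnull (X : R -> Prop) (f : nat -> R) s : (forall x, X x -> exists n, f n = x) -> H_null s X.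
Proof.
  intros Hf eps He. exists f, f. split; [intros; lra|]. split.
  - intros x Hx. destruct (Hf x Hx) as [n <-]. exists n. lra.
  - intros N. assert (H0 : forall n, pw (f n - f n) s = 0) by (intros; unfold pw; rewrite Rminus_diag; destruct Rle_dec; lra).
    replace (sum_f_R0 (fun n => pw (f n - f n) s) N) with 0; [lra|].
    induction N; simpl; rewrite H0; [ring|]. rewrite <- IHN. ring.
Qed.

Lemma fin_cover_len n : forall (L : list (R * R)) c d, (length L <= n)%nat -> c <= d ->
  (forall p, In p L -> fst p <= snd p) ->
  (forall z, c <= z <= d -> exists p, In p L /\ fst p < z < snd p) ->
  d - c <= lsum (fun p => snd p - fst p) L.
Proof.
  induction n; intros L c d Hlen Hcd Hp Hcov.
  - destruct (Hcov c) as [p [Hin _]]; [lra|]. destruct L; [contradiction| simpl in Hlen; lia].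
  - destruct (Hcov c) as [p [Hin Hpc]]; [lra|].
    apply in_split in Hin as [L1 [L2 E]]. subst L.
    rewrite lsum_app. simpl.
    assert (H1 : 0 <= lsum (fun p => snd p - fst p) L1) by (apply lsum_nonneg; intros x hx; pose proof (Hp x (in_or_app _ _ _ (or_introl hx))); lra).
    assert (H2 : 0 <= lsum (fun p => snd p - fst p) L2) by (apply lsum_nonneg; intros x hx; pose proof (Hp x (in_or_app _ _ _ (or_intror (or_intror hx) : In x L1 \/ In x (p :: L2)))); lra).
    destruct (Rlt_le_dec d (snd p)) as [h|h]; [lra|].
    assert (IH : d - snd p <= lsum (fun p => snd p - fst p) (L1 ++ L2)).
    { apply IHn; auto.
      - rewrite length_app in *. simpl in Hlen. lia.
      - intros x hx. apply in_app_or in hx as [hx|hx]; apply Hp; apply in_or_app; [left|right; right]; auto.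
      - intros z Hz. destruct (Hcov z) as [p' [Hp' Hz']]; [lra|]. exists p'. split; auto.
        apply in_app_or in Hp' as [Hp'|[<-|Hp']]; [apply in_or_app; auto| lra| apply in_or_app; auto]. }
    rewrite lsum_app in IH. lra.
Qed.

Lemma list_bound (lr : list R) : exists N : nat, forall x, In x lr -> x <= INR N.
Proof.
  induction lr as [|a lr [N HN]]; [exists 0%nat; intros x []|].
  destruct (exists_nat_ge a) as [M HM]. exists (max N M). intros x [<-|hx].
  - eapply Rle_trans; [exact HM| apply le_INR; lia].
  - eapply Rle_trans; [apply HN; auto| apply le_INR; lia].
Qed.

Lemma HB_count (c d : R) (lo hi : nat -> R) : c <= d -> (forall n, lo n <= hi n) ->
  (forall z, c <= z <= d -> exists n, lo n < z < hi n) ->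
  exists N, d - c <= sum_f_R0 (fun n => hi n - lo n) N.
Proof.
  intros Hcd Hlh Hcov.
  assert (Hcf : forall x, (exists y, (fun x y => exists n, x = INR n /\ lo n < y < hi n) x y) -> (fun x => exists n : nat, x = INR n) x).
  { intros x [y [n [E _]]]. exists n; auto. }
  set (fam := mkfamily (fun x => exists n : nat, x = INR n) (fun x y => exists n, x = INR n /\ lo n < y < hi n) Hcf).
  assert (Hco : covering_open_set (fun z => c <= z <= d) fam).
  { split.
    - intros z Hz. destruct (Hcov z Hz) as [n Hn]. exists (INR n). simpl. exists n. auto.
    - intros x y [n [E Hn]].
      assert (Hp : 0 < Rmin (y - lo n) (hi n - y)) by (apply Rmin_pos; lra).
      exists (mkposreal _ Hp). intros z Hz. unfold disc in Hz. simpl in Hz. exists n. split; auto.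
      pose proof (Rmin_l (y - lo n) (hi n - y)). pose proof (Rmin_r (y - lo n) (hi n - y)).
      apply Rabs_def2 in Hz. lra. }
  destruct (compact_P3 c d fam Hco) as [D [Hcv [lr Hlr]]].
  destruct (list_bound lr) as [N HN]. exists N.
  set (L := map (fun n => (lo n, hi n)) (seq 0 (S N))).
  replace (sum_f_R0 (fun n => hi n - lo n) N) with (lsum (fun p => snd p - fst p) L)
    by (unfold L; rewrite lsum_map, sum_f_seq; reflexivity).
  apply (fin_cover_len (length L)); auto.
  - intros p hp. unfold L in hp. apply in_map_iff in hp as [n [<- _]]. simpl. auto.
  - intros z Hz. destruct (Hcv z Hz) as [y Hy]. simpl in Hy. destruct Hy as [[n [E Hn]] HD].
    assert (In y lr) by (apply Hlr; split; [exists n; auto| auto]).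
    assert (INR n <= INR N) by (rewrite <- E; apply HN; auto). apply INR_le in H0.
    exists (lo n, hi n). split; auto. unfold L. apply in_map_iff. exists n. split; [reflexivity|]. apply in_seq. lia.
Qed.

Lemma closed_null_nowhere (X : R -> Prop) : Defs.closed_set X -> leb_null X -> nowhere_dense X.
Proof.
  intros Hcl Hnull a b Hab.
  assert (Hx : exists x, a < x < b /\ ~ X x).
  { apply NNPP. intros Hn.
    assert (Hall : forall x, a < x < b -> X x).
    { intros x Hx. apply NNPP. intros Hnx. apply Hn. exists x. auto. }
    set (len := (b - a) / 2).
    assert (Hlen : 0 < len) by (unfold len; lra).
    destruct (Hnull (len / 2)) as [aa [bb [Hab2 [Hcov Hsum]]]]; [lra|].
    set (eta := fun n : nat => len / 8 * (/ 2) ^ (S n)).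
    destruct (HB_count (a + (b - a) / 4) (b - (b - a) / 4) (fun n => aa n - eta n) (fun n => bb n + eta n)) as [N HN].
    - lra.
    - intros n. specialize (Hab2 n). unfold eta. assert (0 <= (/ 2) ^ S n) by (apply pow_le; lra). nra.
    - intros z Hz. destruct (Hcov z) as [n Hnn]; [apply Hall; lra|]. exists n.
      unfold eta. assert (0 < (/ 2) ^ S n) by (apply pow_lt; lra). split; nra.
    - replace (sum_f_R0 (fun n => bb n + eta n - (aa n - eta n)) N) with
        (sum_f_R0 (fun n => bb n - aa n) N + len / 4 * sum_f_R0 (fun n => (/ 2) ^ S n) N) in HN.
      + pose proof (geo_half' N). pose proof (Hsum N). assert (0 <= (/2) ^ S N) by (apply pow_le; lra).
        unfold len in *. nra.
      + rewrite scal_sum, <- plus_sum. apply sum_eq. intros i _. unfold eta, len. field. }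
  destruct Hx as [x [Hxab Hnx]].
  assert (He : exists eps, 0 < eps /\ forall y, X y -> eps <= Rabs (y - x)).
  { apply NNPP. intros Hn. apply Hnx. apply Hcl. intros eps Heps. apply NNPP. intros Hn2. apply Hn.
    exists eps. split; auto. intros y Hy. apply Rnot_lt_le. intros Hlt. apply Hn2. exists y. auto. }
  destruct He as [eps [Heps Hy]].
  set (e := Rmin eps (Rmin (x - a) (b - x)) / 2).
  assert (He1 : 0 < Rmin eps (Rmin (x - a) (b - x))) by (repeat apply Rmin_pos; lra).
  pose proof (Rmin_l eps (Rmin (x - a) (b - x))). pose proof (Rmin_r eps (Rmin (x - a) (b - x))).
  pose proof (Rmin_l (x - a) (b - x)). pose proof (Rmin_r (x - a) (b - x)).
  exists (x - e), (x + e). unfold e. repeat split; try lra.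
  intros z Hz. exists e. unfold e. split; [lra|]. intros y HyX. specialize (Hy y HyX).
  pose proof (Rabs_triang (y - z) (z - x)). replace (y - z + (z - x)) with (y - x) in H3 by ring.
  assert (Rabs (z - x) < Rmin eps (Rmin (x - a) (b - x)) / 2) by (apply Rabs_def1; lra). lra.
Qed.

Lemma Hnull1_leb (X : R -> Prop) : H_null 1 X -> leb_null X.
Proof.
  intros H eps He. destruct (H eps He) as [a [b [Hab [Hc Hs]]]]. exists a, b. split; auto. split; auto.
  intros N. eapply Rle_lt_trans; [|apply (Hs N)]. right. apply sum_eq. intros n _.
  unfold pw. destruct Rle_dec as [h|h].
  - specialize (Hab n). lra.
  - rewrite Rpower_1; auto. lra.
Qed.

Open Scope R_scope.

Section Frame.
Variable q : nat. Hypothesis hq : (2 <= q)%nat.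
Variable A : list nat. Hypothesis A_nd : NoDup A. Hypothesis A_ne : A <> nil.
Variable l : nat -> nat. Hypothesis l_pos : forall a, In a A -> (1 <= l a)%nat.
Variable Rm : nat. Hypothesis l_le : forall a, In a A -> (l a <= Rm)%nat.
Variable g : nat -> Z.
Hypothesis g_inj : forall a a' k, In a A -> In a' A -> (g a - g a' = Z.of_nat q * k)%Z -> a = a'.
Variable G : R. Hypothesis G_nn : 0 <= G. Hypothesis G_bd : forall a, In a A -> Rabs (IZR (g a)) <= G.
Variable c0 : R.

Definition Q := INR q.
Lemma Q_gt1 : 1 < Q.
Proof. unfold Q. apply (le_INR 2) in hq. simpl in hq. lra. Qed.
Lemma Q_ge2 : 2 <= Q.
Proof. unfold Q. apply (le_INR 2) in hq. simpl in hq. lra. Qed.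
Definition rr := - / Q.

Fixpoint Sw (w : list nat) : nat := match w with nil => 0%nat | a :: w' => (l a + Sw w')%nat end.
Fixpoint Pw (w : list nat) : R := match w with nil => 0 | a :: w' => rr ^ (l a) * (IZR (g a) + Pw w') end.
Fixpoint zp (n : nat) : Z := match n with O => 1%Z | S n' => (- Z.of_nat q * zp n')%Z end.
Fixpoint Nw (w : list nat) : Z := match w with nil => 0%Z | a :: w' => (g a * zp (Sw w') + Nw w')%Z end.

Definition pre (al : nat -> nat) (j : nat) : list nat := map al (seq 1 j).
Definition code (al : nat -> nat) : Prop := forall n, (1 <= n)%nat -> In (al n) A.
Definition wordA (w : list nat) : Prop := forall a, In a w -> In a A.
Definition val (al : nat -> nat) (x : R) : Prop := Un_cv (fun n => c0 + Pw (pre al n)) x.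
Definition Xs (x : R) : Prop := exists al, code al /\ val al x.
Definition Bc := G / (Q - 1).

Lemma Bc_nn : 0 <= Bc.
Proof. unfold Bc. pose proof Q_gt1. unfold Rdiv; apply Rmult_le_pos; [lra|left; apply Rinv_0_lt_compat; lra]. Qed.

Lemma pre_S al j : pre al (S j) = pre al j ++ [al (S j)].
Proof. unfold pre. rewrite seq_S, map_app. simpl. reflexivity. Qed.

Lemma pre_length al j : length (pre al j) = j.
Proof. unfold pre. rewrite length_map, length_seq. reflexivity. Qed.

Lemma pre_wordA al j : code al -> wordA (pre al j).
Proof. intros Hc a Ha. unfold pre in Ha. apply in_map_iff in Ha as [n [<- Hn]].
  apply in_seq in Hn. apply Hc. lia. Qed.

Lemma pre_ext al be j : (forall n, (1 <= n)%nat -> al n = be n) -> pre al j = pre be j.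
Proof. intros H. unfold pre. apply map_ext_in. intros n hn. apply in_seq in hn. apply H; lia. Qed.

Lemma firstn_pre al j m : (j <= m)%nat -> firstn j (pre al m) = pre al j.
Proof.
  intros H. induction m.
  - assert (j = 0%nat) by lia. subst. reflexivity.
  - destruct (Nat.eq_dec j (S m)) as [->|hj].
    + rewrite firstn_all2; auto. rewrite pre_length. lia.
    + rewrite pre_S, firstn_app, pre_length.
      replace (j - m)%nat with 0%nat by lia. simpl. rewrite app_nil_r. apply IHm. lia.
Qed.

Lemma Sw_app w v : Sw (w ++ v) = (Sw w + Sw v)%nat.
Proof. induction w; simpl; auto. rewrite IHw. lia. Qed.

Lemma Sw_ge_len w : wordA w -> (length w <= Sw w)%nat.
Proof. induction w; simpl; intros H; auto.
  assert (1 <= l a)%nat by (apply l_pos; apply H; left; auto).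
  assert (length w <= Sw w)%nat by (apply IHw; intros b hb; apply H; right; auto). lia. Qed.

Lemma Pw_app w v : Pw (w ++ v) = Pw w + rr ^ (Sw w) * Pw v.
Proof. induction w; simpl.
  - ring.
  - rewrite IHw, pow_add. ring. Qed.

Lemma Pw_snoc w a : Pw (w ++ [a]) = Pw w + rr ^ (Sw w + l a) * IZR (g a).
Proof. rewrite Pw_app. simpl. rewrite pow_add. ring. Qed.

Lemma abs_rr_pow n : Rabs (rr ^ n) = (/ Q) ^ n.
Proof. rewrite <- RPow_abs. unfold rr. rewrite Rabs_Ropp, Rabs_pos_eq; auto.
  pose proof Q_gt1. left. apply Rinv_0_lt_compat. lra. Qed.

Lemma invQ_pos : 0 < / Q.
Proof. pose proof Q_gt1. apply Rinv_0_lt_compat. lra. Qed.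
Lemma invQ_lt1 : / Q < 1.
Proof. pose proof Q_gt1. rewrite <- Rinv_1. apply Rinv_lt_contravar; lra. Qed.

Lemma invQ_pow_pos n : 0 < (/ Q) ^ n.
Proof. apply pow_lt. apply invQ_pos. Qed.

Lemma invQ_pow_le m n : (m <= n)%nat -> (/ Q) ^ n <= (/ Q) ^ m.
Proof.
  intros H. induction H; [lra|]. simpl. pose proof invQ_pos. pose proof invQ_lt1.
  pose proof (invQ_pow_pos m0). nra.
Qed.

Lemma tail_bound al j n : code al -> (j <= n)%nat ->
  Rabs (Pw (pre al n) - Pw (pre al j)) + Bc * (/ Q) ^ (Sw (pre al n)) <= Bc * (/ Q) ^ (Sw (pre al j)).
Proof.
  intros Hc Hjn. induction Hjn.
  - rewrite Rminus_diag, Rabs_R0. lra.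
  - rewrite pre_S, Pw_snoc, Sw_app. simpl Sw. rewrite Nat.add_0_r.
    set (S0 := Sw (pre al m)). set (a := al (S m)). fold S0 in IHHjn.
    assert (Ha : In a A) by (apply Hc; lia).
    pose proof (l_pos a Ha). pose proof (G_bd a Ha).
    assert (Ht : (/ Q) ^ (S0 + l a) <= (/ Q) ^ S0 * / Q).
    { rewrite pow_add. apply Rmult_le_compat_l; [left; apply invQ_pow_pos|].
      replace (/ Q) with ((/ Q) ^ 1) at 2 by ring. apply invQ_pow_le; auto. }
    assert (Habs : Rabs (rr ^ (S0 + l a) * IZR (g a)) <= (/ Q) ^ (S0 + l a) * G).
    { rewrite Rabs_mult, abs_rr_pow. apply Rmult_le_compat_l; auto. left; apply invQ_pow_pos. }
    assert (Htri : Rabs (Pw (pre al m) + rr ^ (S0 + l a) * IZR (g a) - Pw (pre al j)) <=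
      Rabs (Pw (pre al m) - Pw (pre al j)) + Rabs (rr ^ (S0 + l a) * IZR (g a))).
    { replace (Pw (pre al m) + rr ^ (S0 + l a) * IZR (g a) - Pw (pre al j)) with
        ((Pw (pre al m) - Pw (pre al j)) + rr ^ (S0 + l a) * IZR (g a)) by ring.
      apply Rabs_triang. }
    assert (Hk : (/ Q) ^ (S0 + l a) * G + Bc * (/ Q) ^ (S0 + l a) <= Bc * (/ Q) ^ S0).
    { pose proof Q_gt1. unfold Bc.
      replace ((/ Q) ^ (S0 + l a) * G + G / (Q - 1) * (/ Q) ^ (S0 + l a)) with
        (G / (Q - 1) * ((/ Q) ^ (S0 + l a) * Q)) by (field; lra).
      apply Rmult_le_compat_l; [apply Bc_nn|].
      apply (Rmult_le_compat_r Q) in Ht; [|lra].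
      replace ((/ Q) ^ S0 * / Q * Q) with ((/ Q) ^ S0) in Ht by (field; lra). lra. }
    lra.
Qed.

Lemma Sw_pre_ge al j : code al -> (j <= Sw (pre al j))%nat.
Proof. intros Hc. rewrite <- (pre_length al j) at 1. apply Sw_ge_len, pre_wordA; auto. Qed.

Lemma val_exists al : code al -> exists x, val al x.
Proof.
  intros Hc.
  assert (Hcc : Cauchy_crit (fun n => c0 + Pw (pre al n))).
  { intros eps He.
    destruct (lim_zero_pow (/ Q) (2 * Bc) eps) as [N HN]; auto.
    { split; [left; apply invQ_pos| apply invQ_lt1]. }
    exists N. intros n m Hn Hm. unfold R_dist.
    assert (Hb : forall k, (N <= k)%nat -> Rabs (Pw (pre al k) - Pw (pre al N)) <= Bc * (/ Q) ^ N).
    { intros k Hk. pose proof (tail_bound al N k Hc Hk).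
      pose proof (invQ_pow_pos (Sw (pre al k))). pose proof Bc_nn.
      assert ((/ Q) ^ Sw (pre al N) <= (/ Q) ^ N) by (apply invQ_pow_le, Sw_pre_ge; auto).
      nra. }
    specialize (HN N (le_n _)).
    replace (c0 + Pw (pre al n) - (c0 + Pw (pre al m))) with
      ((Pw (pre al n) - Pw (pre al N)) - (Pw (pre al m) - Pw (pre al N))) by ring.
    eapply Rle_lt_trans; [apply Rabs_triang|]. rewrite Rabs_Ropp.
    pose proof (Hb n Hn). pose proof (Hb m Hm). lra. }
  destruct (R_complete _ Hcc) as [x Hx]. exists x. exact Hx.
Qed.

Lemma val_unique al x y : val al x -> val al y -> x = y.
Proof. intros H1 H2. eapply UL_sequence; eauto. Qed.

Lemma val_near al x j : code al -> val al x -> Rabs (x - c0 - Pw (pre al j)) <= Bc * (/ Q) ^ (Sw (pre al j)).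
Proof.
  intros Hc Hv. replace (x - c0 - Pw (pre al j)) with (x - (c0 + Pw (pre al j))) by ring.
  apply (Un_cv_le_bound _ _ _ _ j Hv). intros n Hn.
  pose proof (tail_bound al j n Hc Hn). pose proof (invQ_pow_pos (Sw (pre al n))). pose proof Bc_nn.
  replace (c0 + Pw (pre al n) - (c0 + Pw (pre al j))) with (Pw (pre al n) - Pw (pre al j)) by ring.
  nra.
Qed.

Lemma val_ext al be x : (forall n, (1 <= n)%nat -> al n = be n) -> val al x -> val be x.
Proof. intros H Hv. unfold val. intros e He. destruct (Hv e He) as [N HN]. exists N. intros n Hn.
  rewrite <- (pre_ext al be n H). apply HN; auto. Qed.

Lemma code_ext al be : (forall n, (1 <= n)%nat -> al n = be n) -> code al -> code be.
Proof. intros H Hc n Hn. rewrite <- H; auto. Qed.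


Lemma zp_add m n : zp (m + n) = (zp m * zp n)%Z.
Proof. induction m.
  - change (zp (0 + n)) with (zp n). change (zp 0) with 1%Z. ring.
  - change (zp (S m + n)) with (- Z.of_nat q * zp (m + n))%Z. change (zp (S m)) with (- Z.of_nat q * zp m)%Z.
    rewrite IHm; ring. Qed.

Lemma zp_nz n : zp n <> 0%Z.
Proof. induction n; [discriminate|]. change (zp (S n)) with (- Z.of_nat q * zp n)%Z.
  intros H. apply Z.mul_eq_0 in H as [H|H]; [lia|auto]. Qed.

Lemma zp_IZR n : IZR (zp n) = (- Q) ^ n.
Proof. induction n; [reflexivity|]. change (zp (S n)) with (- Z.of_nat q * zp n)%Z.
  rewrite mult_IZR, opp_IZR, IHn, <- INR_IZR_INZ. reflexivity. Qed.

Lemma Nw_Pw w : IZR (Nw w) = Pw w * (- Q) ^ (Sw w).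
Proof.
  induction w; [simpl; ring|]. cbn [Nw Pw Sw].
  rewrite plus_IZR, mult_IZR, zp_IZR, IHw, pow_add.
  assert (H : rr ^ l a * (- Q) ^ l a = 1).
  { rewrite <- Rpow_mult_distr. unfold rr. replace (- / Q * - Q) with 1. apply pow1.
    pose proof Q_gt1. field. lra. }
  transitivity ((rr ^ l a * (- Q) ^ l a) * ((IZR (g a) + Pw w) * (- Q) ^ Sw w)); [rewrite H; ring| ring].
Qed.

Lemma Nw_snoc w a : Nw (w ++ [a]) = (Nw w * zp (l a) + g a)%Z.
Proof.
  induction w.
  - cbn [app Nw Sw]. change (zp 0) with 1%Z. ring.
  - cbn [app Nw]. rewrite IHw, Sw_app. cbn [Sw]. rewrite Nat.add_0_r, zp_add. ring.
Qed.

Lemma wordA_app w v : wordA (w ++ v) -> wordA w /\ wordA v.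
Proof. intros H; split; intros b hb; apply H; apply in_or_app; auto. Qed.

Lemma Nw_inj w w' : wordA w -> wordA w' -> Sw w = Sw w' -> Nw w = Nw w' -> w = w'.
Proof.
  revert w'. induction w as [|a w IH] using rev_ind; intros w' Hw Hw' HS HN.
  - destruct w' as [|b w'']; auto. simpl in HS.
    assert (1 <= l b)%nat by (apply l_pos; apply Hw'; left; auto). lia.
  - destruct w' as [|b w''].
    + rewrite Sw_app in HS. simpl in HS.
      assert (1 <= l a)%nat by (apply l_pos; apply Hw; apply in_or_app; right; left; auto). lia.
    + destruct (exists_last (l := b :: w'')) as [w0' [a' E]]; [discriminate|].
      rewrite E in *. clear E b w''.
      apply wordA_app in Hw as [Hw1 Hw2]. apply wordA_app in Hw' as [Hw1' Hw2'].
      assert (Ha : In a A) by (apply Hw2; left; auto).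
      assert (Ha' : In a' A) by (apply Hw2'; left; auto).
      rewrite !Nw_snoc in HN. rewrite !Sw_app in HS. simpl in HS.
      pose proof (l_pos a Ha) as la1. pose proof (l_pos a' Ha') as la1'.
      assert (Eaa : a = a').
      { destruct (l a) as [|n] eqn:Ela; [lia|]. destruct (l a') as [|n'] eqn:Ela'; [lia|].
        simpl in HN.
        apply (g_inj a a' (Nw w0' * - zp n' - Nw w * - zp n)%Z); auto. lia. }
      subst a'.
      assert (Nw w = Nw w0').
      { apply (Z.mul_cancel_r _ _ (zp (l a))); [apply zp_nz|]. lia. }
      f_equal. apply IH; auto. lia.
Qed.

Definition cyl (w : list nat) (y : R) : Prop := exists be, code be /\ pre be (length w) = w /\ val be y.

Lemma cyl_near w y : cyl w y -> Rabs (y - c0 - Pw w) <= Bc * (/ Q) ^ (Sw w).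
Proof. intros [be [Hc [Hp Hv]]]. rewrite <- Hp. apply val_near; auto. Qed.

Lemma cyl_wordA w y : cyl w y -> wordA w.
Proof. intros [be [Hc [Hp Hv]]]. rewrite <- Hp. apply pre_wordA; auto. Qed.

Lemma cyl_code w y : cyl w y -> Rabs (IZR (Nw w) - (y - c0) * (- Q) ^ (Sw w)) <= Bc.
Proof.
  intros H. apply cyl_near in H. rewrite Nw_Pw.
  replace (Pw w * (- Q) ^ Sw w - (y - c0) * (- Q) ^ Sw w) with (- (y - c0 - Pw w) * (- Q) ^ Sw w) by ring.
  rewrite Rabs_mult, Rabs_Ropp, <- RPow_abs, Rabs_Ropp, (Rabs_pos_eq Q) by (pose proof Q_gt1; lra).
  assert (E : (/ Q) ^ Sw w * Q ^ Sw w = 1).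
  { rewrite <- Rpow_mult_distr. rewrite Rinv_l; [apply pow1| pose proof Q_gt1; lra]. }
  assert (0 < Q ^ Sw w) by (apply pow_lt; pose proof Q_gt1; lra).
  apply (Rmult_le_compat_r (Q ^ Sw w)) in H; [|lra].
  rewrite Rmult_assoc, E, Rmult_1_r in H. exact H.
Qed.

Lemma count_words (Lw : list (list nat)) (S0 : nat) (aJ bJ : R) (K : nat) :
  NoDup Lw ->
  (forall w, In w Lw -> Sw w = S0 /\ exists y, cyl w y /\ aJ <= y <= bJ) ->
  (bJ - aJ) * Q ^ S0 + 2 * Bc <= INR K -> (length Lw <= 2 * K + 1)%nat.
Proof.
  intros Hnd Hw HK. destruct Lw as [|w1 Lw1]; [simpl; lia|].
  destruct (Hw w1 (or_introl eq_refl)) as [HS1 [y1 [Hc1 Hy1]]].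
  rewrite <- (length_map Nw).
  apply (count_Z _ (Nw w1) K).
  - apply NoDup_map_in; auto. intros x y hx hy e.
    destruct (Hw x hx) as [Hx1 [yx [Hcx _]]]. destruct (Hw y hy) as [Hy2 [yy [Hcy _]]].
    apply Nw_inj; auto; [eapply cyl_wordA; eauto|eapply cyl_wordA; eauto|congruence].
  - intros z hz. apply in_map_iff in hz as [w [<- hw]].
    destruct (Hw w hw) as [HS [y [Hc Hy]]].
    pose proof (cyl_code w y Hc) as C1. pose proof (cyl_code w1 y1 Hc1) as C2.
    rewrite HS in C1. rewrite HS1 in C2.
    apply le_IZR. rewrite abs_IZR, minus_IZR, <- INR_IZR_INZ.
    assert (HQ : Rabs ((- Q) ^ S0) = Q ^ S0).
    { rewrite <- RPow_abs, Rabs_Ropp, Rabs_pos_eq; auto. pose proof Q_gt1; lra. }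
    assert (Hyy : Rabs ((y - y1) * (- Q) ^ S0) <= (bJ - aJ) * Q ^ S0).
    { rewrite Rabs_mult, HQ. apply Rmult_le_compat_r; [apply pow_le; pose proof Q_gt1; lra|].
      apply Rabs_le; lra. }
    replace (IZR (Nw w) - IZR (Nw w1)) with
      ((IZR (Nw w) - (y - c0) * (- Q) ^ S0) - (IZR (Nw w1) - (y1 - c0) * (- Q) ^ S0) + (y - y1) * (- Q) ^ S0) by ring.
    eapply Rle_trans; [apply Rabs_triang|].
    eapply Rle_trans; [apply Rplus_le_compat_r; apply Rabs_triang|]. rewrite Rabs_Ropp. lra.
Qed.

Definition cons_seq (a : nat) (be : nat -> nat) (n : nat) : nat :=
  match n with O => O | S O => a | S m => be m end.

Lemma pre_cons a be j : pre (cons_seq a be) (S j) = a :: pre be j.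
Proof.
  unfold pre. simpl. f_equal. rewrite <- seq_shift, map_map. apply map_ext_in.
  intros n hn. apply in_seq in hn. destruct n; [lia|]. reflexivity.
Qed.

Lemma code_cons a be : In a A -> code be -> code (cons_seq a be).
Proof. intros Ha Hc n Hn. destruct n as [|[|m]]; simpl; auto; [lia|]. apply Hc. lia. Qed.

Lemma val_cons a be y : val be y -> val (cons_seq a be) (c0 + rr ^ (l a) * (IZR (g a) + (y - c0))).
Proof.
  intros Hv e He. destruct (Hv e He) as [N HN]. exists (S N). intros n Hn.
  destruct n as [|m]; [lia|]. rewrite pre_cons. simpl Pw. unfold R_dist.
  specialize (HN m ltac:(lia)). unfold R_dist in HN.
  replace (c0 + rr ^ l a * (IZR (g a) + Pw (pre be m)) - (c0 + rr ^ l a * (IZR (g a) + (y - c0))))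
    with (rr ^ l a * (c0 + Pw (pre be m) - y)) by ring.
  rewrite Rabs_mult, abs_rr_pow.
  assert ((/ Q) ^ l a <= 1).
  { replace 1 with ((/ Q) ^ 0) by reflexivity. apply invQ_pow_le. lia. }
  pose proof (invQ_pow_pos (l a)). pose proof (Rabs_pos (c0 + Pw (pre be m) - y)). nra.
Qed.

Lemma val_prepend w be y : wordA w -> code be -> val be y ->
  exists al, code al /\ pre al (length w) = w /\ val al (c0 + Pw w + rr ^ (Sw w) * (y - c0)).
Proof.
  induction w as [|a w IH]; intros Hw Hc Hv.
  - exists be. split; auto. split; [reflexivity|]. simpl.
    replace (c0 + 0 + 1 * (y - c0)) with y by ring. auto.
  - destruct IH as [al [Hal1 [Hal2 Hal3]]]; auto.
    { intros b hb; apply Hw; right; auto. }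
    exists (cons_seq a al). split; [apply code_cons; auto; apply Hw; left; auto|].
    split; [simpl; rewrite pre_cons, Hal2; reflexivity|].
    pose proof (val_cons a al _ Hal3) as H.
    replace (c0 + rr ^ l a * (IZR (g a) + (c0 + Pw w + rr ^ Sw w * (y - c0) - c0))) with
      (c0 + Pw (a :: w) + rr ^ Sw (a :: w) * (y - c0)) in H; auto.
    simpl. rewrite pow_add. ring.
Qed.

Lemma Xs_decomp x : Xs x <-> exists a y, In a A /\ Xs y /\ x = c0 + rr ^ (l a) * (IZR (g a) + (y - c0)).
Proof.
  split.
  - intros [al [Hc Hv]]. set (be := fun n => al (S n)).
    assert (Hcb : code be) by (intros n Hn; apply Hc; lia).
    destruct (val_exists be Hcb) as [y Hy].
    exists (al 1%nat), y. split; [apply Hc; lia|]. split; [exists be; auto|].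
    pose proof (val_cons (al 1%nat) be y Hy) as H.
    eapply val_unique; [exact Hv|]. eapply val_ext; [|exact H].
    intros n Hn. destruct n as [|[|m]]; simpl; auto; lia.
  - intros [a [y [Ha [[be [Hc Hv]] ->]]]]. exists (cons_seq a be). split.
    + apply code_cons; auto.
    + apply val_cons; auto.
Qed.

Fixpoint iter_path (f : list nat -> nat) (j : nat) : list nat :=
  match j with O => nil | S j' => iter_path f j' ++ [f (iter_path f j')] end.

Lemma build_path (P : list nat -> Prop) : P nil -> (forall w, P w -> exists a, In a A /\ P (w ++ [a])) ->
  exists al, code al /\ forall j, P (pre al j).
Proof.
  intros H0 Hs.
  assert (Hch : forall w, exists a, P w -> In a A /\ P (w ++ [a])).
  { intros w. destruct (classic (P w)) as [h|h].
    - destruct (Hs w h) as [a Ha]. exists a; auto.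
    - exists 0%nat. tauto. }
  set (f := fun w => proj1_sig (constructive_indefinite_description _ (Hch w))).
  assert (Hf : forall w, P w -> In (f w) A /\ P (w ++ [f w])).
  { intros w. unfold f. destruct (constructive_indefinite_description _ (Hch w)). simpl. auto. }
  set (al := fun n => match n with O => O | S m => f (iter_path f m) end).
  assert (Hpre : forall j, pre al j = iter_path f j).
  { induction j; [reflexivity|]. rewrite pre_S, IHj. reflexivity. }
  assert (HP : forall j, P (iter_path f j)).
  { induction j; simpl; auto. apply Hf; auto. }
  exists al. split.
  - intros n Hn. destruct n; [lia|]. simpl. apply Hf, HP.
  - intros j. rewrite Hpre. auto.
Qed.

Lemma fin_min_eps (Qp : nat -> R -> Prop) :
  (forall a e e', 0 < e' <= e -> Qp a e -> Qp a e') ->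
  forall L, (forall a, In a L -> exists e, 0 < e /\ Qp a e) -> exists e, 0 < e /\ forall a, In a L -> Qp a e.
Proof.
  intros Hm L. induction L as [|b L IH]; intros H.
  - exists 1. split; [lra|]. intros a [].
  - destruct IH as [e1 [He1 H1]]; [intros a ha; apply H; right; auto|].
    destruct (H b (or_introl eq_refl)) as [e2 [He2 H2]].
    exists (Rmin e1 e2). split; [apply Rmin_pos; auto|].
    intros a [<-|ha].
    + apply (Hm b e2); auto. split; [apply Rmin_pos; auto| apply Rmin_r].
    + apply (Hm a e1); auto. split; [apply Rmin_pos; auto| apply Rmin_l].
Qed.

Lemma Xs_closed : Defs.closed_set Xs.
Proof.
  intros x Hx.
  set (P := fun w => forall eps, 0 < eps -> exists be y, code be /\ pre be (length w) = w /\ val be y /\ Rabs (y - x) < eps).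
  assert (P0 : P nil).
  { intros eps He. destruct (Hx eps He) as [y [[be [Hc Hv]] Hy]]. exists be, y. repeat split; auto. }
  assert (PS : forall w, P w -> exists a, In a A /\ P (w ++ [a])).
  { intros w Hw. apply NNPP. intros Hn.
    assert (Hall : forall a, In a A -> exists e, 0 < e /\
      ~ (exists be y, code be /\ pre be (S (length w)) = w ++ [a] /\ val be y /\ Rabs (y - x) < e)).
    { intros a Ha. apply NNPP. intros Hn2. apply Hn. exists a. split; auto.
      intros e He. apply NNPP. intros Hn3. apply Hn2. exists e. split; auto.
      intros [be [y [h1 [h2 h3]]]]. apply Hn3. exists be, y. rewrite length_app. simpl.
      rewrite Nat.add_1_r. auto. }
    destruct (fin_min_eps (fun a e => ~ (exists be y, code be /\ pre be (S (length w)) = w ++ [a] /\ val be y /\ Rabs (y - x) < e)))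
      with (L := A) as [e [He Hq]]; auto.
    { intros a e e' He' Hq [be [y [h1 [h2 [h3 h4]]]]]. apply Hq. exists be, y. repeat split; auto. lra. }
    destruct (Hw e He) as [be [y [h1 [h2 [h3 h4]]]]].
    apply (Hq (be (S (length w)))); [apply h1; lia|].
    exists be, y. repeat split; auto. rewrite pre_S, h2. reflexivity. }
  destruct (build_path P P0 PS) as [al [Hc HP]].
  destruct (val_exists al Hc) as [z Hz]. exists al. split; auto.
  replace x with z; auto.
  apply Rminus_diag_uniq.
  apply (zero_of_small (z - x) (2 * Bc) (/ Q)); [split; [left; apply invQ_pos|apply invQ_lt1]|].
  intros j. apply le_epsilon. intros eps He.
  destruct (HP j eps He) as [be [y [h1 [h2 [h3 h4]]]]]. rewrite pre_length in h2.
  pose proof (val_near al z j Hc Hz) as N1. pose proof (val_near be y j h1 h3) as N2.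
  rewrite h2 in N2.
  assert ((/ Q) ^ Sw (pre al j) <= (/ Q) ^ j) by (apply invQ_pow_le, Sw_pre_ge; auto).
  pose proof Bc_nn.
  replace (z - x) with ((z - c0 - Pw (pre al j)) - (y - c0 - Pw (pre al j)) + (y - x)) by ring.
  eapply Rle_trans; [apply Rabs_triang|].
  eapply Rle_trans; [apply Rplus_le_compat_r; apply Rabs_triang|]. rewrite Rabs_Ropp.
  nra.
Qed.

Fixpoint Wl (K : nat) : list (list nat) :=
  match K with O => [nil] | S K' => flat_map (fun a => map (cons a) (Wl K')) A end.

Lemma In_Wl K v : In v (Wl K) <-> length v = K /\ wordA v.
Proof.
  revert v. induction K; intros v; simpl.
  - split.
    + intros [<-|[]]. split; auto. intros b [].
    + intros [H1 _]. destruct v; [left; auto| discriminate].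
  - rewrite in_flat_map. split.
    + intros [a [Ha Hv]]. apply in_map_iff in Hv as [v' [<- Hv']]. apply IHK in Hv' as [h1 h2].
      split; [simpl; auto|]. intros b [<-|hb]; auto.
    + intros [H1 H2]. destruct v as [|a v']; [discriminate|]. exists a. split; [apply H2; left; auto|].
      apply in_map. apply IHK. split; [simpl in H1; lia|]. intros b hb; apply H2; right; auto.
Qed.

Lemma NoDup_cons_flat (W : list (list nat)) (L : list nat) : NoDup W -> NoDup L ->
  NoDup (flat_map (fun a => map (cons a) W) L).
Proof.
  intros HW. induction L as [|a L IHL]; intros HL; simpl; [constructor|].
  inversion HL; subst.
  apply NoDup_app.
  - apply NoDup_map_in; auto. intros x y _ _ e. injection e; auto.
  - apply IHL; auto.
  - intros v hv hv'. apply in_map_iff in hv as [x [<- hx]]. apply in_flat_map in hv' as [b [hb hb']].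
    apply in_map_iff in hb' as [y [e hy]]. injection e as e1 e2. subst b. contradiction.
Qed.

Lemma NoDup_Wl K : NoDup (Wl K).
Proof.
  induction K; simpl; [constructor; [intros []|constructor]|].
  apply NoDup_cons_flat; auto.
Qed.

Definition wt (S0 : nat) (t : R) : R := exp (- INR S0 * t * ln Q).

Lemma wt_add m n t : wt (m + n) t = wt m t * wt n t.
Proof. unfold wt. rewrite <- exp_plus, plus_INR. f_equal. ring. Qed.

Lemma wt_pos S0 t : 0 < wt S0 t.
Proof. apply exp_pos. Qed.

Lemma lnQ_pos : 0 < ln Q.
Proof. rewrite <- ln_1. apply ln_increasing; [lra| apply Q_gt1]. Qed.

Lemma lsum_Wl K t : lsum (fun w => wt (Sw w) t) (Wl K) = (lsum (fun a => wt (l a) t) A) ^ K.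
Proof.
  induction K; simpl.
  - unfold wt. simpl. replace (- 0 * t * ln Q) with 0 by ring. rewrite exp_0. ring.
  - rewrite lsum_flat_map, Rmult_comm, <- lsum_scal.
    apply lsum_ext. intros a _. rewrite lsum_map. cbn [Sw].
    rewrite <- IHK, Rmult_comm, <- lsum_scal. apply lsum_ext. intros w _. rewrite wt_add. ring.
Qed.

Lemma lsum_lt {T} (f h : T -> R) L : L <> nil -> (forall x, In x L -> f x < h x) -> lsum f L < lsum h L.
Proof.
  induction L as [|a L IH]; intros Hn H; [congruence|]. simpl.
  pose proof (H a (or_introl eq_refl)).
  destruct L as [|b L'].
  - simpl. lra.
  - assert (lsum f (b :: L') < lsum h (b :: L')) by (apply IH; [discriminate| intros; apply H; right; auto]). lra.
Qed.

Lemma pw_pos x s : 0 < x -> pw x s = exp (s * ln x).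
Proof. intros H. unfold pw. destruct (Rle_dec x 0); [lra|]. reflexivity. Qed.

Lemma pw_nonneg x s : 0 <= pw x s.
Proof. unfold pw. destruct (Rle_dec x 0); [lra|]. unfold Rpower. left; apply exp_pos. Qed.

Definition optF {T} (F : T -> R) (o : option T) : R := match o with Some w => F w | None => 0 end.

Lemma sum_nth_error_le {T} (F : T -> R) L N : (forall x, In x L -> 0 <= F x) ->
  sum_f_R0 (fun i => optF F (nth_error L i)) N <= lsum F L.
Proof.
  revert N. induction L as [|x L IH]; intros N HF.
  - simpl. assert (sum_f_R0 (fun i => optF F (nth_error (@nil T) i)) N = 0).
    { induction N; simpl; rewrite ?nth_error_nil; simpl; [reflexivity|]. rewrite IHN. ring. }
    lra.
  - destruct N.
    + simpl. assert (0 <= lsum F L) by (apply lsum_nonneg; intros; apply HF; right; auto). lra.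
    + rewrite decomp_sum by lia. simpl. simpl pred.
      assert (sum_f_R0 (fun i => optF F (nth_error L i)) N <= lsum F L) by (apply IH; intros; apply HF; right; auto).
      lra.
Qed.

Section Upper.
Variable d : R. Hypothesis Hd : lsum (fun a => wt (l a) d) A = 1.

Lemma H_null_Xs s : d < s -> H_null s Xs.
Proof.
  intros Hs eps He.
  set (th := lsum (fun a => wt (l a) s) A).
  assert (Hth : 0 <= th < 1).
  { split; [apply lsum_nonneg; intros; left; apply wt_pos|].
    rewrite <- Hd. apply lsum_lt; auto. intros a Ha. unfold wt. apply exp_increasing.
    pose proof (l_pos a Ha). apply (le_INR 1) in H. simpl in H. pose proof lnQ_pos.
    assert (0 < INR (l a) * ln Q) by nra. nra. }
  set (Bp := Bc + 1). assert (HBp : 0 < Bp) by (unfold Bp; pose proof Bc_nn; lra).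
  set (C := exp (s * ln (2 * Bp))).
  destruct (lim_zero_pow th C eps Hth He) as [n Hn]. specialize (Hn n (le_n _)).
  set (Wn := Wl n).
  set (lo := fun w => c0 + Pw w - Bp * (/ Q) ^ (Sw w)).
  set (hi := fun w => c0 + Pw w + Bp * (/ Q) ^ (Sw w)).
  exists (fun i => optF lo (nth_error Wn i)), (fun i => optF hi (nth_error Wn i)).
  split; [|split].
  - intros i. destruct (nth_error Wn i); simpl; [|lra]. unfold lo, hi.
    pose proof (invQ_pow_pos (Sw l0)). nra.
  - intros x [al [Hc Hv]]. assert (Hin : In (pre al n) Wn).
    { apply In_Wl. split; [apply pre_length| apply pre_wordA; auto]. }
    apply In_nth_error in Hin as [i Hi]. exists i. rewrite Hi. simpl. unfold lo, hi.
    pose proof (val_near al x n Hc Hv). pose proof (invQ_pow_pos (Sw (pre al n))).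
    apply Rabs_le_inv in H. pose proof Bc_nn. unfold Bp. nra.
  - intros N.
    eapply Rle_lt_trans; [|exact Hn].
    replace (C * th ^ n) with (lsum (fun w => C * wt (Sw w) s) Wn) by (rewrite lsum_scal; unfold Wn; rewrite lsum_Wl; reflexivity).
    eapply Rle_trans; [|apply (sum_nth_error_le (fun w => C * wt (Sw w) s))].
    + apply sum_f_R0_le. intros i _. destruct (nth_error Wn i) as [w|]; simpl; [|unfold pw; destruct Rle_dec; lra].
      unfold lo, hi. replace (c0 + Pw w + Bp * (/ Q) ^ Sw w - (c0 + Pw w - Bp * (/ Q) ^ Sw w)) with (2 * Bp * (/ Q) ^ Sw w) by ring.
      pose proof (invQ_pow_pos (Sw w)).
      rewrite pw_pos by nra. rewrite ln_mult, ln_pow, ln_Rinv by (try apply invQ_pos; try apply Q_gt1; try lra; try (pose proof Q_gt1; lra)).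
      unfold C, wt. rewrite <- exp_plus. right. f_equal. ring.
    + intros w _. left. apply Rmult_lt_0_compat; [apply exp_pos| apply wt_pos].
Qed.
End Upper.

Lemma fin_choice2 (Pr : nat -> nat -> nat -> Prop) :
  (forall a N K N' K', Pr a N K -> (N <= N')%nat -> (K <= K')%nat -> Pr a N' K') ->
  forall L, (forall a, In a L -> exists N K, Pr a N K) -> exists N K, forall a, In a L -> Pr a N K.
Proof.
  intros Hm L. induction L as [|b L IH]; intros H.
  - exists 0%nat, 0%nat. intros a [].
  - destruct IH as [N1 [K1 H1]]; [intros a ha; apply H; right; auto|].
    destruct (H b (or_introl eq_refl)) as [N2 [K2 H2]].
    exists (max N1 N2), (max K1 K2). intros a [<-|ha].
    + apply (Hm b N2 K2); auto; lia.
    + apply (Hm a N1 K1); auto; lia.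
Qed.

Lemma konig (Pn : nat -> list nat -> Prop) :
  (forall al, code al -> exists n j, Pn n (pre al j)) ->
  exists N K, forall v, In v (Wl K) -> exists n, (n <= N)%nat /\ exists j, (j <= K)%nat /\ Pn n (firstn j v).
Proof.
  intros Hcov.
  set (good := fun w => exists N K, forall v, In v (Wl K) -> exists n, (n <= N)%nat /\
     exists j, (j <= length w + K)%nat /\ Pn n (firstn j (w ++ v))).
  assert (Hmono : forall w N K N' K', (forall v, In v (Wl K) -> exists n, (n <= N)%nat /\
       exists j, (j <= length w + K)%nat /\ Pn n (firstn j (w ++ v))) -> (N <= N')%nat -> (K <= K')%nat ->
       (forall v, In v (Wl K') -> exists n, (n <= N')%nat /\
       exists j, (j <= length w + K')%nat /\ Pn n (firstn j (w ++ v)))).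
  { intros w N K N' K' H HN HK v Hv.
    apply In_Wl in Hv as [Hv1 Hv2].
    destruct (H (firstn K v)) as [n [Hn [j [Hj HP]]]].
    { apply In_Wl. split; [rewrite length_firstn; lia|]. intros b hb; apply Hv2; eapply in_firstn_in; eauto. }
    exists n. split; [lia|]. exists j. split; [lia|].
    replace (firstn j (w ++ v)) with (firstn j (w ++ firstn K v)); auto.
    rewrite !firstn_app, firstn_firstn. f_equal. f_equal. lia. }
  assert (Hstep : forall w, (forall a, In a A -> good (w ++ [a])) -> good w).
  { intros w Hall.
    destruct (fin_choice2 (fun a N K => forall v, In v (Wl K) -> exists n, (n <= N)%nat /\
       exists j, (j <= length (w ++ [a]) + K)%nat /\ Pn n (firstn j ((w ++ [a]) ++ v)))) with (L := A)
      as [N [K HNK]].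
    { intros a N K N' K' H HN HK. eapply Hmono; eauto. }
    { intros a Ha. apply Hall; auto. }
    exists N, (S K). intros v Hv. apply In_Wl in Hv as [Hv1 Hv2].
    destruct v as [|a v']; [discriminate|].
    assert (Ha : In a A) by (apply Hv2; left; auto).
    destruct (HNK a Ha v') as [n [Hn [j [Hj HP]]]].
    { apply In_Wl. split; [simpl in Hv1; lia|]. intros b hb; apply Hv2; right; auto. }
    exists n. split; auto. exists j. split.
    - rewrite length_app in Hj. simpl in Hj. lia.
    - rewrite <- app_assoc in HP. exact HP. }
  assert (Hroot : good nil).
  { apply NNPP. intros Hng.
    destruct (build_path (fun w => ~ good w)) as [al [Hc Hal]]; auto.
    { intros w Hw. apply NNPP. intros Hn. apply Hw. apply Hstep. intros a Ha.
      apply NNPP. intros Hn2. apply Hn. exists a. split; auto. }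
    destruct (Hcov al Hc) as [n [j HP]].
    apply (Hal j). exists n, 0%nat. intros v Hv. apply In_Wl in Hv as [Hv1 _].
    destruct v; [|discriminate]. exists n. split; auto. exists j. split.
    - rewrite pre_length. lia.
    - rewrite app_nil_r, firstn_all2; auto. rewrite pre_length. lia. }
  destruct Hroot as [N [K H]]. exists N, K. intros v Hv.
  destruct (H v Hv) as [n [Hn [j [Hj HP]]]]. exists n. split; auto. exists j. split; auto.
Qed.

Section Lower.
Variable d : R. Hypothesis Hd : lsum (fun a => wt (l a) d) A = 1. Hypothesis Hdpos : 0 < d.

Definition mu (w : list nat) : R := wt (Sw w) d.

Lemma sum_mu_Wl K : lsum mu (Wl K) = 1.
Proof. unfold mu. rewrite lsum_Wl, Hd. apply pow1. Qed.

Lemma wt_0 t : wt 0 t = 1.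
Proof. unfold wt. simpl. replace (- 0 * t * ln Q) with 0 by ring. apply exp_0. Qed.

Lemma determined j : forall K (h : list nat -> R), (j <= K)%nat ->
  lsum (fun v => mu v * h (firstn j v)) (Wl K) = lsum (fun w => mu w * h w) (Wl j).
Proof.
  induction j; intros K h Hj.
  - simpl. unfold mu at 2. simpl. rewrite wt_0.
    transitivity (h nil * lsum mu (Wl K)); [rewrite <- lsum_scal; apply lsum_ext; intros; ring|].
    rewrite sum_mu_Wl. ring.
  - destruct K as [|K]; [lia|]. simpl. rewrite !lsum_flat_map. apply lsum_ext. intros a Ha.
    rewrite !lsum_map. unfold mu. cbn [Sw firstn].
    transitivity (wt (l a) d * lsum (fun v => mu v * h (a :: firstn j v)) (Wl K)).
    { rewrite <- lsum_scal. apply lsum_ext. intros v _. unfold mu. rewrite wt_add. ring. }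
    rewrite (IHj K (fun w => h (a :: w))) by lia.
    rewrite <- lsum_scal. apply lsum_ext. intros v _. unfold mu. rewrite wt_add. ring.
Qed.

Lemma mass_bound (Pn : nat -> list nat -> Prop) N K :
  (forall v, In v (Wl K) -> exists n, (n <= N)%nat /\ exists j, (j <= K)%nat /\ Pn n (firstn j v)) ->
  1 <= sum_f_R0 (fun n => sum_f_R0 (fun j => lsum (fun w => mu w * ind (Pn n w)) (Wl j)) K) N.
Proof.
  intros H. rewrite <- (sum_mu_Wl K) at 1.
  eapply Rle_trans.
  { apply (lsum_le mu (fun v => mu v * sum_f_R0 (fun n => sum_f_R0 (fun j => ind (Pn n (firstn j v))) K) N)).
    intros v Hv. destruct (H v Hv) as [n [Hn [j [Hj HP]]]].
    assert (1 <= sum_f_R0 (fun n => sum_f_R0 (fun j => ind (Pn n (firstn j v))) K) N).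
    { eapply Rle_trans; [|apply (sum_f_R0_ge_term _ N n); auto].
      - eapply Rle_trans; [|apply (sum_f_R0_ge_term _ K j); auto].
        + cbv beta. rewrite ind_true; auto. lra.
        + intros; apply ind_nonneg.
      - intros m. apply sum_f_R0_nonneg. intros; apply ind_nonneg. }
    assert (0 <= mu v) by (left; apply wt_pos). nra. }
  right.
  transitivity (lsum (fun v => sum_f_R0 (fun n => sum_f_R0 (fun j => mu v * ind (Pn n (firstn j v))) K) N) (Wl K)).
  { apply lsum_ext. intros v _. rewrite scal_sum. apply sum_eq. intros n _.
    rewrite Rmult_comm, scal_sum. apply sum_eq. intros; ring. }
  rewrite lsum_sum_f. apply sum_eq. intros n _. rewrite lsum_sum_f. apply sum_eq. intros j Hj.
  apply (determined j K (fun w => ind (Pn n w))). auto.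
Qed.
Lemma NoDup_flat_Wl m n : NoDup (flat_map Wl (seq m n)).
Proof.
  revert m. induction n; intros m; simpl; [constructor|].
  apply NoDup_app; [apply NoDup_Wl| apply IHn|].
  intros v hv hv'. apply In_Wl in hv as [h1 _]. apply in_flat_map in hv' as [j [hj hv']].
  apply In_Wl in hv' as [h2 _]. apply in_seq in hj. lia.
Qed.

Lemma sum_Wl_WW (F : list nat -> R) K : sum_f_R0 (fun j => lsum F (Wl j)) K = lsum F (flat_map Wl (seq 0 (S K))).
Proof. rewrite sum_f_seq, lsum_flat_map. reflexivity. Qed.

Lemma wt_anti m n : (m <= n)%nat -> wt n d <= wt m d.
Proof.
  intros H. unfold wt. destruct (Nat.eq_dec m n) as [->|hn]; [lra|]. left. apply exp_increasing.
  assert (INR m < INR n) by (apply lt_INR; lia). pose proof lnQ_pos.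
  assert (0 < d * ln Q) by nra. nra.
Qed.

Lemma sum_const (c : R) n : sum_f_R0 (fun _ => c) n = INR (S n) * c.
Proof. induction n; simpl sum_f_R0; [simpl; ring|]. rewrite IHn, (S_INR (S n)). ring. Qed.

Lemma per_n_bound (aJ bJ : R) (k K0 K : nat) :
  (forall t, (t <= Rm)%nat -> (bJ - aJ) * Q ^ (k + t) + 2 * Bc <= INR K0) ->
  sum_f_R0 (fun j => lsum (fun w => mu w * ind ((k <= Sw w <= k + Rm)%nat /\ exists y, cyl w y /\ aJ <= y <= bJ)) (Wl j)) K
    <= wt k d * (INR (S Rm) * INR (2 * K0 + 1)).
Proof.
  intros HK. rewrite sum_Wl_WW. set (WW := flat_map Wl (seq 0 (S K))).
  set (Pn := fun w => (k <= Sw w <= k + Rm)%nat /\ exists y, cyl w y /\ aJ <= y <= bJ).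
  eapply Rle_trans; [apply (lsum_le _ (fun w => wt k d * ind (Pn w)))|].
  { intros w _. destruct (classic (Pn w)) as [h|h].
    - cbv beta. repeat rewrite ind_true by exact h. rewrite !Rmult_1_r. unfold mu. apply wt_anti. destruct h; lia.
    - repeat rewrite ind_false by exact h. lra. }
  rewrite lsum_scal. apply Rmult_le_compat_l; [left; apply wt_pos|].
  eapply Rle_trans; [apply (lsum_le _ (fun w => sum_f_R0 (fun t => ind (Sw w = (k + t)%nat /\ exists y, cyl w y /\ aJ <= y <= bJ)) Rm))|].
  { intros w _. destruct (classic (Pn w)) as [h|h].
    - rewrite ind_true by auto. destruct h as [h1 h2].
      eapply Rle_trans; [|apply (sum_f_R0_ge_term _ Rm (Sw w - k)); [intros; apply ind_nonneg|lia]].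
      cbv beta. rewrite ind_true; [lra|]. split; auto. lia.
    - rewrite ind_false by auto. apply sum_f_R0_nonneg. intros; apply ind_nonneg. }
  rewrite lsum_sum_f.
  replace (INR (S Rm) * INR (2 * K0 + 1)) with (sum_f_R0 (fun _ => INR (2 * K0 + 1)) Rm) by apply sum_const.
  apply sum_f_R0_le. intros t Ht.
  destruct (lsum_ind_filter (fun w => Sw w = (k + t)%nat /\ exists y, cyl w y /\ aJ <= y <= bJ) WW)
    as [l' [H1 [H2 [H3 H4]]]].
  rewrite H4. apply le_INR. apply (count_words l' (k + t) aJ bJ K0); auto.
  apply H3. apply NoDup_flat_Wl.
Qed.

Lemma find_j al : code al -> forall k, exists j, (k <= Sw (pre al j) <= k + Rm)%nat.
Proof.
  intros Hc k.
  assert (H : forall m, (k <= Sw (pre al m))%nat -> exists j, (k <= Sw (pre al j) <= k + Rm)%nat).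
  { induction m; intros Hm.
    - exists 0%nat. simpl in *. lia.
    - destruct (le_lt_dec k (Sw (pre al m))) as [h|h]; auto.
      exists (S m). rewrite pre_S, Sw_app in *. cbn [Sw] in *.
      assert (l (al (S m)) <= Rm)%nat by (apply l_le, Hc; lia). lia. }
  apply (H k). apply Sw_pre_ge; auto.
Qed.

Lemma exist_k x : 0 < x <= 1 -> exists k, (/ Q) ^ k <= x /\ x * Q ^ k <= Q.
Proof.
  intros Hx.
  destruct (lim_zero_pow (/ Q) 1 x) as [k0 Hk0]; [split; [left; apply invQ_pos|apply invQ_lt1]|lra|].
  specialize (Hk0 k0 (le_n _)).
  assert (H : forall k, (/ Q) ^ k <= x -> exists k', (/ Q) ^ k' <= x /\ (k' = 0%nat \/ x < (/ Q) ^ (pred k'))).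
  { induction k; intros Hk.
    - exists 0%nat. auto.
    - destruct (Rle_dec ((/ Q) ^ k) x) as [h|h]; auto.
      exists (S k). split; auto. right. simpl. lra. }
  destruct (H k0) as [k [Hk1 Hk2]]; [lra|].
  exists k. split; auto. pose proof Q_gt1.
  destruct Hk2 as [->|Hk2].
  - simpl. lra.
  - destruct k as [|k]; simpl pred in Hk2.
    + simpl. lra.
    + assert (E : (/ Q) ^ k * Q ^ k = 1) by (rewrite <- Rpow_mult_distr, Rinv_l; [apply pow1|lra]).
      assert (0 < Q ^ k) by (apply pow_lt; lra).
      simpl. apply (Rmult_lt_compat_r (Q ^ k)) in Hk2; auto. rewrite E in Hk2.
      assert (x * (Q * Q ^ k) = Q * (x * Q ^ k)) by ring. nra.
Qed.

Lemma exp_le_mono x y : x <= y -> exp x <= exp y.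
Proof. intros [h|h]; [left; apply exp_increasing; auto| right; subst; auto]. Qed.

Lemma ln_le_mono x y : 0 < x -> x <= y -> ln x <= ln y.
Proof. intros Hx [h|h]; [left; apply ln_increasing; auto| right; subst; auto]. Qed.

Lemma geo_half N : sum_f_R0 (fun n => (/ 2) ^ (S n)) N <= 1 - (/ 2) ^ (S N).
Proof. induction N; simpl; [lra|]. simpl in IHN. lra. Qed.

Lemma H_infinite_Xs s : 0 < s < d -> H_infinite s Xs.
Proof.
  intros Hs M.
  destruct (exists_nat_ge (Q ^ (S Rm) + 2 * Bc)) as [K0 HK0].
  set (C0 := INR (S Rm) * INR (2 * K0 + 1)).
  assert (HC0 : 1 <= C0).
  { unfold C0. assert (1 <= INR (S Rm)) by (apply (le_INR 1); lia).
    assert (1 <= INR (2 * K0 + 1)) by (apply (le_INR 1); lia). nra. }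
  set (Mp := Rmax M 1). assert (HMp : 1 <= Mp) by apply Rmax_r.
  set (delta := exp (ln (2 * C0 * Mp) / (s - d))).
  assert (Hln2 : 0 <= ln (2 * C0 * Mp)).
  { rewrite <- ln_1. apply ln_le_mono; [lra|]. nra. }
  assert (Hdel : exp ((s - d) * ln delta) = 2 * C0 * Mp).
  { unfold delta. rewrite ln_exp. replace ((s - d) * (ln (2 * C0 * Mp) / (s - d))) with (ln (2 * C0 * Mp)) by (field; lra).
    apply exp_ln. nra. }
  assert (Hdel1 : delta <= 1).
  { unfold delta. rewrite <- exp_0. apply exp_le_mono. unfold Rdiv.
    assert (/ (s - d) < 0) by (apply Rinv_lt_0_compat; lra). nra. }
  exists delta. split; [apply exp_pos|].
  intros a b Hab Hcov.
  set (e0 := / (2 * C0)).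
  assert (He0 : 0 < e0 <= / 2).
  { unfold e0. split; [apply Rinv_0_lt_compat; lra|]. apply Rinv_le_contravar; lra. }
  set (eta := fun n : nat => exp (ln (e0 * (/ 2) ^ (S n)) / d)).
  assert (Hpos2 : forall n : nat, 0 < e0 * (/ 2) ^ (S n)).
  { intros n. apply Rmult_lt_0_compat; [lra| apply pow_lt; lra]. }
  assert (Heta : forall n, exp (d * ln (eta n)) = e0 * (/ 2) ^ (S n)).
  { intros n. unfold eta. rewrite ln_exp. replace (d * (ln (e0 * (/ 2) ^ S n) / d)) with (ln (e0 * (/ 2) ^ S n)) by (field; lra).
    apply exp_ln. auto. }
  assert (Heta1 : forall n, 0 < eta n <= 1).
  { intros n. split; [apply exp_pos|]. unfold eta. rewrite <- exp_0. apply exp_le_mono.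
    assert (ln (e0 * (/ 2) ^ S n) <= 0).
    { rewrite <- ln_1. apply ln_le_mono; auto.
      assert ((/ 2) ^ S n <= 1) by (apply pow_le_one; lra). pose proof (pow_le (/2) (S n)). nra. }
    unfold Rdiv. assert (0 < / d) by (apply Rinv_0_lt_compat; lra). nra. }
  set (Lp := fun n => Rmax (b n - a n) (eta n)).
  assert (HLp : forall n, 0 < Lp n <= 1).
  { intros n. unfold Lp. specialize (Hab n). specialize (Heta1 n). split.
    - eapply Rlt_le_trans; [|apply Rmax_r]. lra.
    - apply Rmax_lub; lra. }
  assert (Hk : forall n, exists k, (/ Q) ^ k <= Lp n /\ Lp n * Q ^ k <= Q) by (intros; apply exist_k; auto).
  set (kf := fun n => proj1_sig (constructive_indefinite_description _ (Hk n))).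
  assert (Hkf : forall n, (/ Q) ^ (kf n) <= Lp n /\ Lp n * Q ^ (kf n) <= Q).
  { intros n. unfold kf. destruct constructive_indefinite_description; simpl; auto. }
  set (Pn := fun n w => (kf n <= Sw w <= kf n + Rm)%nat /\ exists y, cyl w y /\ a n <= y <= b n).
  destruct (konig Pn) as [N [K HNK]].
  { intros al Hc. destruct (val_exists al Hc) as [x Hx].
    destruct (Hcov x (ex_intro _ al (conj Hc Hx))) as [n Hn].
    destruct (find_j al Hc (kf n)) as [j Hj]. exists n, j. split; auto.
    exists x. split; auto. exists al. rewrite pre_length. auto. }
  pose proof (mass_bound Pn N K HNK) as H1.
  assert (H2 : forall n, sum_f_R0 (fun j => lsum (fun w => mu w * ind (Pn n w)) (Wl j)) K <= wt (kf n) d * C0).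
  { intros n. apply per_n_bound. intros t Ht. destruct (Hkf n) as [_ Hk2].
    assert (b n - a n <= Lp n) by apply Rmax_l. specialize (Hab n).
    assert (Q ^ t <= Q ^ Rm) by (apply Rle_pow; [pose proof Q_gt1; lra| auto]).
    assert (Hq1 : 0 < Q ^ kf n) by (apply pow_lt; pose proof Q_gt1; lra).
    assert (0 < Q ^ t) by (apply pow_lt; pose proof Q_gt1; lra).
    rewrite pow_add.
    assert ((b n - a n) * (Q ^ kf n * Q ^ t) <= Lp n * Q ^ kf n * Q ^ Rm).
    { replace ((b n - a n) * (Q ^ kf n * Q ^ t)) with (((b n - a n) * Q ^ kf n) * Q ^ t) by ring.
      assert (0 <= b n - a n) by lra.
      apply Rmult_le_compat; try nra. }
    assert (Lp n * Q ^ kf n * Q ^ Rm <= Q ^ S Rm).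
    { simpl. assert (0 < Q ^ Rm) by (apply pow_lt; pose proof Q_gt1; lra). nra. }
    lra. }
  assert (H3 : forall n, wt (kf n) d <= pw (b n - a n) d + e0 * (/ 2) ^ (S n)).
  { intros n. destruct (Hkf n) as [Hk1 _].
    assert (wt (kf n) d <= exp (d * ln (Lp n))).
    { unfold wt. apply exp_le_mono.
      assert (ln ((/ Q) ^ kf n) <= ln (Lp n)) by (apply ln_le_mono; auto; apply invQ_pow_pos).
      rewrite ln_pow, ln_Rinv in H by (try apply invQ_pos; pose proof Q_gt1; lra). nra. }
    specialize (Heta1 n). pose proof (pw_nonneg (b n - a n) d).
    unfold Lp, Rmax in H. destruct (Rle_dec (b n - a n) (eta n)).
    - rewrite Heta in H. lra.
    - apply Rnot_le_lt in n0. rewrite <- pw_pos in H by lra. pose proof (Hpos2 n). lra. }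
  assert (H4 : 1 <= C0 * (sum_f_R0 (fun n => pw (b n - a n) d) N + e0)).
  { eapply Rle_trans; [exact H1|].
    eapply Rle_trans; [apply sum_f_R0_le; intros n _; apply H2|].
    eapply Rle_trans.
    { apply (sum_f_R0_le _ (fun n => C0 * (pw (b n - a n) d + e0 * (/ 2) ^ (S n)))). intros n _.
      rewrite Rmult_comm. apply Rmult_le_compat_l; [lra| apply H3]. }
    replace (sum_f_R0 (fun n => C0 * (pw (b n - a n) d + e0 * (/ 2) ^ (S n))) N) with
      (C0 * sum_f_R0 (fun n => pw (b n - a n) d + e0 * (/ 2) ^ (S n)) N)
      by (rewrite scal_sum; apply sum_eq; intros; ring).
    rewrite plus_sum.
    replace (sum_f_R0 (fun i => e0 * (/ 2) ^ S i) N) with (e0 * sum_f_R0 (fun i => (/ 2) ^ S i) N)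
      by (rewrite scal_sum; apply sum_eq; intros; ring).
    pose proof (geo_half N). assert (0 <= (/ 2) ^ S N) by (apply pow_le; lra).
    apply Rmult_le_compat_l; [lra|]. nra. }
  assert (HCe : C0 * e0 = / 2) by (unfold e0; field; lra).
  assert (H5 : / 2 <= C0 * sum_f_R0 (fun n => pw (b n - a n) d) N) by nra.
  exists N.
  assert (H6 : sum_f_R0 (fun n => (2 * C0 * Mp) * pw (b n - a n) d) N <= sum_f_R0 (fun n => pw (b n - a n) s) N).
  { apply sum_f_R0_le. intros n _. specialize (Hab n).
    destruct (Rle_dec (b n - a n) 0) as [h|h].
    - unfold pw. destruct (Rle_dec (b n - a n) 0); [|lra]. lra.
    - rewrite !pw_pos by lra. rewrite <- Hdel, <- exp_plus. apply exp_le_mono.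
      assert (ln (b n - a n) <= ln delta) by (apply ln_le_mono; lra). nra. }
  assert (M <= Mp) by apply Rmax_l.
  assert (0 <= sum_f_R0 (fun n => pw (b n - a n) d) N) by (apply sum_f_R0_nonneg; intros; apply pw_nonneg).
  replace (sum_f_R0 (fun n => (2 * C0 * Mp) * pw (b n - a n) d) N) with ((2 * C0 * Mp) * sum_f_R0 (fun n => pw (b n - a n) d) N) in H6
    by (rewrite scal_sum; apply sum_eq; intros; ring).
  nra.
Qed.

End Lower.

Lemma Xs_nonempty : exists x, Xs x.
Proof.
  assert (Ha0 : exists a0, In a0 A).
  { clear -A_ne. destruct A as [|a0 L]; [congruence|]. exists a0; left; auto. }
  destruct Ha0 as [a0 Ha0].
  assert (Hc : code (fun _ => a0)) by (intros n _; auto).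
  destruct (val_exists _ Hc) as [x Hx]. exists x, (fun _ => a0). auto.
Qed.

Lemma Xs_bounded x : Xs x -> Rabs x <= Rabs c0 + Bc.
Proof.
  intros [al [Hc Hv]]. pose proof (val_near al x 0 Hc Hv). simpl in H.
  replace (x - c0 - 0) with (x - c0) in H by ring. rewrite Rmult_1_r in H.
  pose proof (Rabs_triang (x - c0) c0). replace (x - c0 + c0) with x in H0 by ring. lra.
Qed.

Lemma Xs_selfsim : self_similar Xs.
Proof.
  split; [apply Xs_nonempty|]. split; [apply Xs_closed|]. split; [exists (Rabs c0 + Bc); apply Xs_bounded|].
  exists (map (fun a => (rr ^ (l a), c0 + rr ^ (l a) * (IZR (g a) - c0))) A). split; [|split].
  - intros E. apply map_eq_nil in E. contradiction.
  - intros p hp. apply in_map_iff in hp as [a [<- ha]]. simpl. rewrite abs_rr_pow.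
    split; [apply invQ_pow_pos|]. eapply Rle_lt_trans; [apply (invQ_pow_le 1); apply l_pos; auto|].
    simpl. rewrite Rmult_1_r. apply invQ_lt1.
  - intros x. rewrite Xs_decomp. split.
    + intros [a [y [ha [hy ->]]]]. exists (rr ^ (l a), c0 + rr ^ (l a) * (IZR (g a) - c0)), y.
      split; [apply in_map_iff; exists a; auto|]. split; auto. simpl. ring.
    + intros [p [y [hp [hy ->]]]]. apply in_map_iff in hp as [a [<- ha]]. exists a, y. split; auto. split; auto.
      simpl. ring.
Qed.

Section Dims.
Variable d : R. Hypothesis Hd : lsum (fun a => wt (l a) d) A = 1. Hypothesis Hdpos : 0 < d.

Lemma Xs_dim : hausdorff_dim Xs d.
Proof.
  split; [lra|]. split.
  - intros s Hs. apply (H_null_Xs d Hd s Hs).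
  - intros s Hs. apply (H_infinite_Xs d Hd Hdpos s Hs).
Qed.

Lemma Xs_uncountable : uncountable Xs.
Proof.
  intros [f Hf]. apply (Hnull_Hinf_false (d / 2) Xs); [lra| |].
  - apply (countable_Hnull Xs f); auto.
  - apply (H_infinite_Xs d Hd Hdpos). lra.
Qed.

Lemma Xs_two : exists y1 y2, Xs y1 /\ Xs y2 /\ y1 <> y2.
Proof.
  destruct Xs_nonempty as [x0 Hx0].
  apply NNPP. intros Hn. apply Xs_uncountable. exists (fun _ => x0). intros x Hx. exists 0%nat.
  apply NNPP. intros Hne. apply Hn. exists x0, x. auto.
Qed.

Lemma Xs_perfect : perfect Xs.
Proof.
  split; [apply Xs_closed|].
  intros x [al [Hc Hv]] eps He.
  destruct Xs_two as [y1 [y2 [[b1 [Hb1 Hv1]] [[b2 [Hb2 Hv2]] Hne]]]].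
  destruct (lim_zero_pow (/ Q) (2 * Bc) eps) as [j Hj]; auto.
  { split; [left; apply invQ_pos| apply invQ_lt1]. }
  specialize (Hj j (le_n _)).
  set (w := pre al j).
  assert (Hw : wordA w) by (apply pre_wordA; auto).
  destruct (val_prepend w b1 y1 Hw Hb1 Hv1) as [a1 [Ha1 [Hp1 Hva1]]].
  destruct (val_prepend w b2 y2 Hw Hb2 Hv2) as [a2 [Ha2 [Hp2 Hva2]]].
  set (z1 := c0 + Pw w + rr ^ Sw w * (y1 - c0)) in *.
  set (z2 := c0 + Pw w + rr ^ Sw w * (y2 - c0)) in *.
  assert (Hz : z1 <> z2).
  { unfold z1, z2. intros E. apply Hne.
    assert (rr ^ Sw w <> 0) by (apply pow_nonzero; unfold rr; pose proof invQ_pos; lra).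
    apply (Rmult_eq_reg_l (rr ^ Sw w)); auto. lra. }
  assert (Hnear : forall a z, code a -> pre a (length w) = w -> val a z -> Rabs (z - x) < eps).
  { intros a z Ha Hp Hvz. pose proof (val_near a z (length w) Ha Hvz) as N1. rewrite Hp in N1.
    pose proof (val_near al x j Hc Hv) as N2. fold w in N2.
    assert ((/ Q) ^ Sw w <= (/ Q) ^ j) by (apply invQ_pow_le; unfold w; apply Sw_pre_ge; auto).
    pose proof Bc_nn.
    replace (z - x) with ((z - c0 - Pw w) - (x - c0 - Pw w)) by ring.
    eapply Rle_lt_trans; [apply Rabs_triang|]. rewrite Rabs_Ropp. nra. }
  destruct (Req_dec z1 x) as [E1|E1].
  - exists z2. split; [exists a2; auto|]. split; [congruence|]. apply (Hnear a2 z2); auto.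
  - exists z1. split; [exists a1; auto|]. split; auto. apply (Hnear a1 z1); auto.
Qed.

Hypothesis Hd1 : d < 1.

Lemma Xs_leb_null : leb_null Xs.
Proof. apply Hnull1_leb. apply (H_null_Xs d Hd). auto. Qed.

Lemma Xs_nowhere : nowhere_dense Xs.
Proof. apply closed_null_nowhere; [apply Xs_closed| apply Xs_leb_null]. Qed.
End Dims.

End Frame.


Lemma Un_cv_shift_iff (u : nat -> R) L : Un_cv u L <-> Un_cv (fun n => u (S n)) L.
Proof.
  split; intros H e He; destruct (H e He) as [N HN].
  - exists N. intros n Hn. apply HN. lia.
  - exists (S N). intros n Hn. destruct n; [lia|]. apply HN. lia.
Qed.

Section Main.
Variable q u : nat. Hypothesis hq : (3 < q)%nat. Hypothesis hu : (u < q)%nat.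

Definition AL := filter (fun p => negb (Nat.eqb p u)) (seq 1 (q - 1)).

Lemma hq2 : (2 <= q)%nat. Proof. lia. Qed.

Lemma In_AL p : In p AL <-> in_Theta q u p.
Proof.
  unfold AL, in_Theta. rewrite filter_In, in_seq. split.
  - intros [h1 h2]. apply Bool.negb_true_iff, Nat.eqb_neq in h2. lia.
  - intros [h1 h2]. split; [lia|]. apply Bool.negb_true_iff, Nat.eqb_neq. auto.
Qed.

Lemma AL_nd : NoDup AL.
Proof. apply NoDup_filter, seq_NoDup. Qed.

Lemma AL_two : exists p1 p2, In p1 AL /\ In p2 AL /\ p1 <> p2 /\ (2 <= p2)%nat.
Proof.
  assert (HI : forall p, (1 <= p <= q - 1)%nat -> p <> u -> In p AL) by (intros; apply In_AL; split; auto).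
  destruct (Nat.eq_dec u 1) as [E|h1].
  - exists 2%nat, 3%nat. split; [apply HI; lia|]. split; [apply HI; lia|]. lia.
  - destruct (Nat.eq_dec u 2) as [E|h2].
    + exists 1%nat, 3%nat. split; [apply HI; lia|]. split; [apply HI; lia|]. lia.
    + exists 1%nat, 2%nat. split; [apply HI; lia|]. split; [apply HI; lia|]. lia.
Qed.

Lemma AL_ne : AL <> nil.
Proof. destruct AL_two as [p1 [p2 [h _]]]. intros E. rewrite E in h. contradiction. Qed.

Lemma AL_len2 : (2 <= length AL)%nat.
Proof.
  destruct AL_two as [p1 [p2 [h1 [h2 [h3 _]]]]].
  destruct AL as [|a [|b L]]; simpl; try lia.
  - contradiction.
  - destruct h1 as [<-|[]]. destruct h2 as [<-|[]]. congruence.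
Qed.

Lemma AL_lenq : (length AL <= q - 1)%nat.
Proof. unfold AL. rewrite <- (length_seq (q - 1) 1) at 2. apply filter_length_le. Qed.

Lemma AL_bounds p : In p AL -> (1 <= p <= q - 1)%nat.
Proof. intros H. apply In_AL in H as [h _]. auto. Qed.

Lemma code_Theta al : code AL al <-> Theta_seq q u al.
Proof. unfold code, Theta_seq. split; intros H n Hn; apply In_AL; apply H; auto. Qed.

Definition lE := fun _ : nat => 1%nat.
Definition gE := fun p : nat => Z.of_nat p.
Definition XE := Xs q AL lE gE 0.

Lemma gE_inj : forall a a' k, In a AL -> In a' AL -> (gE a - gE a' = Z.of_nat q * k)%Z -> a = a'.
Proof. intros a a' k Ha Ha' E. apply AL_bounds in Ha. apply AL_bounds in Ha'. unfold gE in E.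
  destruct (Z_lt_le_dec k 1) as [h|h]; [destruct (Z_lt_le_dec k 0) as [h'|h']|].
  - assert (Z.of_nat q * k <= - Z.of_nat q)%Z by nia. lia.
  - assert (k = 0%Z) by lia. subst. lia.
  - assert (Z.of_nat q * k >= Z.of_nat q)%Z by nia. lia. Qed.

Lemma gE_bd : forall a, In a AL -> Rabs (IZR (gE a)) <= INR q.
Proof. intros a Ha. apply AL_bounds in Ha. unfold gE. rewrite <- INR_IZR_INZ, Rabs_pos_eq by apply pos_INR.
  apply le_INR. lia. Qed.

Lemma Sw_lE w : Sw lE w = length w.
Proof. induction w; simpl; auto. Qed.

Lemma rr_pow_div k x : rr q ^ k * x = x / (- INR q) ^ k.
Proof.
  unfold rr, Q. rewrite <- Rinv_opp, pow_inv. unfold Rdiv. ring.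
Qed.

Lemma PwE_sum al n : Pw q lE gE (pre al (S n)) = sum_f_R0 (fun k => INR (al (S k)) / (- INR q) ^ (S k)) n.
Proof.
  induction n.
  - unfold pre. simpl seq. simpl map. cbn [Pw sum_f_R0]. unfold lE, gE. rewrite <- INR_IZR_INZ.
    rewrite Rplus_0_r. rewrite <- (rr_pow_div 1 (INR (al 1%nat))). reflexivity.
  - rewrite pre_S, Pw_snoc, IHn. simpl sum_f_R0. f_equal.
    rewrite Sw_lE, pre_length. unfold lE, gE. rewrite <- INR_IZR_INZ, rr_pow_div.
    replace (S n + 1)%nat with (S (S n)) by lia. reflexivity.
Qed.

Lemma Eh_eq : Eh q u = XE.
Proof.
  apply functional_extensionality. intros y. apply propositional_extensionality.
  unfold Eh, XE, Xs. split.
  - intros [al [Ht Hn]]. exists al. split; [apply code_Theta; auto|].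
    unfold val. apply Un_cv_shift_iff.
    intros e He. destruct (Hn e He) as [N HN]. exists N. intros n Hn'.
    rewrite Rplus_0_l, PwE_sum. apply HN; auto.
  - intros [al [Hc Hv]]. exists al. split; [apply code_Theta; auto|].
    unfold val in Hv. apply Un_cv_shift_iff in Hv.
    intros e He. destruct (Hv e He) as [N HN]. exists N. intros n Hn'.
    specialize (HN n Hn'). rewrite Rplus_0_l, PwE_sum in HN. auto.
Qed.

Definition lD := fun p : nat => p.
Definition gD := fun p : nat => (Z.of_nat p - Z.of_nat u)%Z.
Definition c0D := - INR u / (INR q + 1).
Definition XD := Xs q AL lD gD c0D.

Lemma gD_inj : forall a a' k, In a AL -> In a' AL -> (gD a - gD a' = Z.of_nat q * k)%Z -> a = a'.
Proof. intros a a' k Ha Ha' E. apply AL_bounds in Ha. apply AL_bounds in Ha'. unfold gD in E.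
  destruct (Z_lt_le_dec k 1) as [h|h]; [destruct (Z_lt_le_dec k 0) as [h'|h']|].
  - assert (Z.of_nat q * k <= - Z.of_nat q)%Z by nia. lia.
  - assert (k = 0%Z) by lia. subst. lia.
  - assert (Z.of_nat q * k >= Z.of_nat q)%Z by nia. lia. Qed.

Lemma gD_bd : forall a, In a AL -> Rabs (IZR (gD a)) <= INR q.
Proof. intros a Ha. apply AL_bounds in Ha. unfold gD. rewrite minus_IZR, <- !INR_IZR_INZ.
  apply Rabs_le. assert (INR a <= INR q) by (apply le_INR; lia). assert (INR u <= INR q) by (apply le_INR; lia).
  pose proof (pos_INR a). pose proof (pos_INR u). lra. Qed.

Lemma lD_pos : forall a, In a AL -> (1 <= lD a)%nat.
Proof. intros a Ha. apply AL_bounds in Ha. unfold lD. lia. Qed.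

Lemma Sw_lD_pre al n : Sw lD (pre al n) = blk_end al n.
Proof. induction n; [reflexivity|]. rewrite pre_S, (Sw_app q hq2). rewrite IHn. simpl. unfold lD. lia. Qed.

Lemma blk_S al n : blk_end al (S n) = (blk_end al n + al (S n))%nat.
Proof. reflexivity. Qed.

Lemma blk_mono al m m' : code AL al -> (m <= m')%nat -> (blk_end al m <= blk_end al m')%nat.
Proof. intros Hc H. induction H; auto. rewrite blk_S. lia. Qed.

Lemma blk_strict al m m' : code AL al -> (m < m')%nat -> (blk_end al m < blk_end al m')%nat.
Proof. intros Hc H. assert (blk_end al m < blk_end al (S m))%nat.
  { rewrite blk_S. assert (1 <= al (S m))%nat by (apply AL_bounds, Hc; lia). lia. }
  pose proof (blk_mono al (S m) m' Hc H). lia. Qed.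

Lemma blk_ge al n : code AL al -> (n <= blk_end al n)%nat.
Proof. intros Hc. induction n; auto. rewrite blk_S. assert (1 <= al (S n))%nat by (apply AL_bounds, Hc; lia). lia. Qed.

Lemma blk_inj al m n : code AL al -> blk_end al m = blk_end al n -> m = n.
Proof. intros Hc E. destruct (Nat.lt_trichotomy m n) as [h|[h|h]]; auto.
  - pose proof (blk_strict al m n Hc h). lia.
  - pose proof (blk_strict al n m Hc h). lia. Qed.

Fixpoint tsum (be : nat -> nat) (K : nat) : R :=
  match K with O => 0 | S K' => tsum be K' + INR (be (S K')) * rr q ^ (S K') end.

Lemma sum_tsum be K : sum_f_R0 (fun k => INR (be (S k)) / (- INR q) ^ (S k)) K = tsum be (S K).
Proof.
  induction K.
  - change (tsum be 1) with (0 + INR (be 1%nat) * rr q ^ 1). cbn [sum_f_R0].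
    rewrite Rplus_0_l, Rmult_comm, rr_pow_div. reflexivity.
  - cbn [sum_f_R0]. rewrite IHK.
    change (tsum be (S (S K))) with (tsum be (S K) + INR (be (S (S K))) * rr q ^ (S (S K))).
    rewrite (Rmult_comm (INR _)), rr_pow_div. reflexivity.
Qed.

Lemma c0D_rel : c0D * (1 - rr q) = INR u * rr q.
Proof. unfold c0D, rr, Q. assert (0 < INR q) by (apply lt_0_INR; lia). field. lra. Qed.

Section Blocks.
Variable al be : nat -> nat.
Hypothesis Hc : code AL al.
Hypothesis H1 : forall n, (1 <= n)%nat -> be (blk_end al n) = al n.
Hypothesis H2 : forall k, (1 <= k)%nat -> (forall n, (1 <= n)%nat -> k <> blk_end al n) -> be k = u.

Lemma tsum_inner n : tsum be (blk_end al n) = c0D * (1 - rr q ^ (blk_end al n)) + Pw q lD gD (pre al n) ->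
  forall j, (j < al (S n))%nat -> tsum be (blk_end al n + j) = c0D * (1 - rr q ^ (blk_end al n + j)) + Pw q lD gD (pre al n).
Proof.
  intros Hb j. induction j; intros Hj.
  - rewrite Nat.add_0_r. auto.
  - replace (blk_end al n + S j)%nat with (S (blk_end al n + j)) by lia. simpl tsum.
    rewrite IHj by lia.
    assert (Hu : be (S (blk_end al n + j)) = u).
    { apply H2; [lia|]. intros m Hm E.
      destruct (le_lt_dec m n) as [h|h].
      - pose proof (blk_mono al m n Hc h). lia.
      - pose proof (blk_mono al (S n) m Hc h). rewrite blk_S in H. lia. }
    rewrite Hu. simpl pow. pose proof c0D_rel.
    transitivity (c0D - c0D * rr q ^ (blk_end al n + j) + rr q ^ (blk_end al n + j) * (INR u * rr q) + Pw q lD gD (pre al n)); [ring|].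
    rewrite <- H. ring.
Qed.

Lemma tsum_base n : tsum be (blk_end al n) = c0D * (1 - rr q ^ (blk_end al n)) + Pw q lD gD (pre al n).
Proof.
  induction n.
  - simpl. unfold pre. simpl. ring.
  - assert (Ha : (1 <= al (S n))%nat) by (apply AL_bounds, Hc; lia).
    rewrite blk_S. replace (blk_end al n + al (S n))%nat with (S (blk_end al n + (al (S n) - 1))) by lia.
    simpl tsum. rewrite (tsum_inner n IHn) by lia.
    replace (S (blk_end al n + (al (S n) - 1))) with (blk_end al (S n)) by (rewrite blk_S; lia).
    rewrite H1 by lia.
    rewrite pre_S, Pw_snoc, Sw_lD_pre.
    change (lD (al (S n))) with (al (S n)). change (gD (al (S n))) with (Z.of_nat (al (S n)) - Z.of_nat u)%Z.
    rewrite minus_IZR, <- !INR_IZR_INZ.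
    set (K := (blk_end al n + (al (S n) - 1))%nat).
    replace (blk_end al n + al (S n))%nat with (S K) by (unfold K; lia).
    replace (blk_end al (S n)) with (S K) by (unfold K; rewrite blk_S; lia).
    simpl pow. pose proof c0D_rel.
    assert (E : c0D * rr q ^ K * (1 - rr q) = INR u * rr q * rr q ^ K).
    { rewrite Rmult_assoc, (Rmult_comm (rr q ^ K)), <- Rmult_assoc, H. ring. }
    nra.
Qed.

Lemma blk_decomp K : exists n j, K = (blk_end al n + j)%nat /\ (j < al (S n))%nat.
Proof.
  induction K.
  - exists 0%nat, 0%nat. split; [reflexivity|]. apply AL_bounds, Hc; lia.
  - destruct IHK as [n [j [E Hj]]].
    destruct (Nat.eq_dec (S j) (al (S n))) as [h|h].
    + exists (S n), 0%nat. split; [rewrite blk_S; lia|]. apply AL_bounds, Hc; lia.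
    + exists n, (S j). split; lia.
Qed.
End Blocks.

Definition mk_beta (al : nat -> nat) (k : nat) : nat :=
  match find (fun m => Nat.eqb (blk_end al m) k) (seq 1 k) with Some m => al m | None => u end.

Lemma mk_beta_concat al : code AL al -> is_concat u al (mk_beta al).
Proof.
  intros Hc k Hk. split.
  - intros n Hn E. subst k. unfold mk_beta. destruct (find _ _) as [m|] eqn:Ef.
    + apply find_some in Ef as [Hm Em]. apply Nat.eqb_eq in Em. f_equal. apply (blk_inj al); auto.
    + exfalso. pose proof (find_none _ _ Ef n) as H. cbv beta in H. rewrite Nat.eqb_refl in H.
      assert (In n (seq 1 (blk_end al n))) by (apply in_seq; pose proof (blk_ge al n Hc); lia). specialize (H H0). discriminate.
  - intros Hn. unfold mk_beta. destruct (find _ _) as [m|] eqn:Ef; auto.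
    apply find_some in Ef as [Hm Em]. apply Nat.eqb_eq in Em. apply in_seq in Hm.
    exfalso. apply (Hn m); [lia| auto].
Qed.

Lemma Dh_eq : Dh q u = XD.
Proof.
  apply functional_extensionality. intros x. apply propositional_extensionality.
  assert (HQ1 : 1 < Q q) by (apply Q_gt1, hq2).
  assert (Hb : 0 <= / Q q < 1) by (split; [left; apply invQ_pos, hq2| apply invQ_lt1, hq2]).
  unfold Dh, XD, Xs. split.
  - intros [al [be [Hts [Hic Hn]]]]. apply code_Theta in Hts.
    exists al. split; auto.
    assert (H1 : forall n, (1 <= n)%nat -> be (blk_end al n) = al n).
    { intros n Hn1. apply (Hic (blk_end al n)); auto. pose proof (blk_ge al n Hts). lia. }
    assert (H2 : forall k, (1 <= k)%nat -> (forall n, (1 <= n)%nat -> k <> blk_end al n) -> be k = u).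
    { intros k Hk Hne. apply (Hic k Hk). auto. }
    intros e He.
    destruct (Hn (e / 2)) as [N1 HN1]; [lra|].
    destruct (lim_zero_pow (/ Q q) (Rabs c0D) (e / 2) Hb) as [N2 HN2]; [lra|].
    exists (max (S N1) N2). intros n Hn'.
    pose proof (blk_ge al n Hts) as Hge.
    destruct (blk_end al n) as [|K] eqn:EK; [lia|].
    specialize (HN1 K ltac:(lia)). rewrite sum_tsum, <- EK in HN1.
    rewrite (tsum_base al be Hts H1 H2 n) in HN1. unfold R_dist in *.
    replace (c0D + Pw q lD gD (pre al n) - x) with
      ((c0D * (1 - rr q ^ blk_end al n) + Pw q lD gD (pre al n) - x) + c0D * rr q ^ blk_end al n) by ring.
    eapply Rle_lt_trans; [apply Rabs_triang|].
    rewrite Rabs_mult, (abs_rr_pow q hq2).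
    assert ((/ Q q) ^ blk_end al n <= (/ Q q) ^ n) by (apply invQ_pow_le; [apply hq2| lia]).
    specialize (HN2 n ltac:(lia)). pose proof (Rabs_pos c0D). nra.
  - intros [al [Hc Hv]]. exists al, (mk_beta al). split; [apply code_Theta; auto|]. split; [apply mk_beta_concat; auto|].
    pose proof (mk_beta_concat al Hc) as Hic.
    assert (H1 : forall n, (1 <= n)%nat -> mk_beta al (blk_end al n) = al n).
    { intros n Hn1. apply (Hic (blk_end al n)); auto. pose proof (blk_ge al n Hc). lia. }
    assert (H2 : forall k, (1 <= k)%nat -> (forall n, (1 <= n)%nat -> k <> blk_end al n) -> mk_beta al k = u).
    { intros k Hk Hne. apply (Hic k Hk). auto. }
    set (Tc := Rabs c0D + Bc q (INR q)).
    intros e He.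
    destruct (lim_zero_pow (/ Q q) Tc e Hb He) as [N HN].
    exists (N + q)%nat. intros K HK. unfold R_dist. rewrite sum_tsum.
    destruct (blk_decomp al Hc (S K)) as [n [j [EK Hj]]].
    rewrite EK, (tsum_inner al (mk_beta al) Hc H2 n (tsum_base al (mk_beta al) Hc H1 H2 n) j Hj).
    pose proof (val_near q hq2 AL lD lD_pos gD (INR q) (pos_INR q) gD_bd c0D al x n Hc Hv) as Hnear.
    rewrite Sw_lD_pre in Hnear.
    assert (Haq : (al (S n) <= q - 1)%nat) by (apply AL_bounds, Hc; lia).
    replace (c0D * (1 - rr q ^ (blk_end al n + j)) + Pw q lD gD (pre al n) - x) with
      (- (x - c0D - Pw q lD gD (pre al n)) - c0D * rr q ^ (blk_end al n + j)) by ring.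
    eapply Rle_lt_trans; [apply Rabs_triang|]. rewrite Rabs_Ropp, Rabs_Ropp, Rabs_mult, (abs_rr_pow q hq2).
    assert ((/ Q q) ^ (blk_end al n + j) <= (/ Q q) ^ (S K - q)) by (apply invQ_pow_le; [apply hq2| lia]).
    assert ((/ Q q) ^ (blk_end al n) <= (/ Q q) ^ (S K - q)) by (apply invQ_pow_le; [apply hq2| lia]).
    assert ((/ Q q) ^ (S K - q) <= (/ Q q) ^ N) by (apply invQ_pow_le; [apply hq2| lia]).
    specialize (HN N (le_n _)).
    assert (0 <= Bc q (INR q)) by (apply Bc_nn; [apply hq2| apply pos_INR]).
    pose proof (Rabs_pos c0D). unfold Tc in HN.
    assert (0 <= (/ Q q) ^ blk_end al n) by (apply pow_le; lra).
    assert (0 <= (/ Q q) ^ (blk_end al n + j)) by (apply pow_le; lra).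
    nra.
Qed.

Definition Fs (a : R) : R := lsum (fun p => wt q p a) AL.

Lemma lsum_filter_if (f : nat -> bool) (H : nat -> R) L :
  lsum (fun x => if f x then 0 else H x) L = lsum H (filter (fun x => negb (f x)) L).
Proof. induction L; simpl; [reflexivity|]. destruct (f a); simpl; rewrite IHL; ring. Qed.

Lemma dim_eq_iff a : dim_eq q u a <-> lsum (fun p => wt q (lD p) a) AL = 1.
Proof.
  unfold dim_eq, sum_f. rewrite sum_f_seq.
  replace (S (q - 1 - 1)) with (q - 1)%nat by lia.
  rewrite <- (lsum_map (fun p => if (p =? u)%nat then 0 else Rpower (1 / INR q) (INR p * a)) (fun x => (x + 1)%nat)).
  replace (map (fun x => (x + 1)%nat) (seq 0 (q - 1))) with (seq 1 (q - 1)).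
  2:{ rewrite <- seq_shift. apply map_ext. intros; lia. }
  rewrite lsum_filter_if. fold AL.
  replace (lsum (fun p => Rpower (1 / INR q) (INR p * a)) AL) with (lsum (fun p => wt q (lD p) a) AL); [tauto|].
  apply lsum_ext. intros p _. unfold Rpower, wt, lD, Q. unfold Rdiv. rewrite Rmult_1_l, ln_Rinv.
  - f_equal. ring.
  - apply lt_0_INR. lia.
Qed.

Lemma wt_cont p : continuity (fun a => wt q p a).
Proof. unfold wt. reg. Qed.

Lemma Fs_cont : continuity Fs.
Proof.
  unfold Fs. induction AL as [|p L IH]; simpl.
  - apply continuity_const. intros x y. reflexivity.
  - apply (continuity_plus (fun a => wt q p a) (fun a => lsum (fun p => wt q p a) L)); auto. apply wt_cont.
Qed.

Lemma wt_mono p a b : a <= b -> wt q p b <= wt q p a.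
Proof.
  intros H. unfold wt. apply exp_le_mono. pose proof (pos_INR p). pose proof (lnQ_pos q hq2).
  assert (0 <= INR p * ln (Q q)) by nra. nra.
Qed.

Lemma Fs_mono a b : a <= b -> Fs b <= Fs a.
Proof. intros H. unfold Fs. apply lsum_le. intros p _. apply wt_mono; auto. Qed.

Lemma lsum_one {T} (L : list T) : lsum (fun _ => 1) L = INR (length L).
Proof. induction L; simpl lsum; [reflexivity|]. rewrite IHL. simpl length. rewrite S_INR. ring. Qed.

Lemma Fs_0 : Fs 0 = INR (length AL).
Proof. unfold Fs. rewrite <- lsum_one. apply lsum_ext. intros p _. unfold wt.
  replace (- INR p * 0 * ln (Q q)) with 0 by ring. apply exp_0. Qed.

Lemma geo_seq x s m : 0 <= x < 1 -> lsum (fun p => x ^ p) (seq s m) <= x ^ s / (1 - x).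
Proof.
  intros Hx. revert s. induction m; intros s; simpl lsum.
  - apply Rmult_le_pos; [apply pow_le; lra| left; apply Rinv_0_lt_compat; lra].
  - specialize (IHm (S s)). simpl pow in IHm.
    assert (x ^ s + x * x ^ s / (1 - x) = x ^ s / (1 - x)) by (field; lra). lra.
Qed.

Lemma lsum_filter_le {T} (f : T -> bool) (h : T -> R) L : (forall x, In x L -> 0 <= h x) -> lsum h (filter f L) <= lsum h L.
Proof. induction L as [|a L IH]; simpl; intros H; [lra|].
  assert (lsum h (filter f L) <= lsum h L) by (apply IH; auto). pose proof (H a (or_introl eq_refl)).
  destruct (f a); simpl; lra. Qed.

Lemma Fs_1 : Fs 1 <= / 3.
Proof.
  assert (HQ : 4 <= Q q) by (unfold Q; apply (le_INR 4) in hq; simpl in hq; lra).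
  assert (Hi : 0 <= / Q q < 1) by (split; [left; apply invQ_pos, hq2| apply invQ_lt1, hq2]).
  unfold Fs. transitivity (lsum (fun p => (/ Q q) ^ p) AL).
  { right. apply lsum_ext. intros p _. unfold wt.
    rewrite <- (exp_ln ((/ Q q) ^ p)) by (apply pow_lt, invQ_pos, hq2). f_equal.
    rewrite ln_pow, ln_Rinv by (try apply invQ_pos, hq2; lra). ring. }
  unfold AL. eapply Rle_trans; [apply lsum_filter_le; intros; apply pow_le; lra|].
  eapply Rle_trans; [apply geo_seq; auto|]. simpl. rewrite Rmult_1_r.
  apply (Rmult_le_reg_r (1 - / Q q)); [lra|]. unfold Rdiv. rewrite Rmult_assoc, Rinv_l by lra.
  assert (/ Q q <= / 4) by (apply Rinv_le_contravar; lra). lra.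
Qed.

Lemma a0_exists : exists a0, lsum (fun p => wt q (lD p) a0) AL = 1.
Proof.
  destruct (IVT (fun a => 1 - Fs a) 0 1) as [z [Hz1 Hz2]].
  - apply (continuity_minus (fun _ => 1) Fs); [apply continuity_const; intros x y; reflexivity| apply Fs_cont].
  - lra.
  - rewrite Fs_0. pose proof AL_len2. apply (le_INR 2) in H. simpl in H. lra.
  - pose proof Fs_1. lra.
  - exists z. unfold Fs in Hz2. unfold lD. lra.
Qed.

Lemma a0_bounds a0 : lsum (fun p => wt q (lD p) a0) AL = 1 -> 0 < a0 < 1.
Proof.
  intros H. change (Fs a0 = 1) in H. split.
  - apply Rnot_le_lt. intros Hle. pose proof (Fs_mono a0 0 Hle). rewrite Fs_0 in H0.
    pose proof AL_len2. apply (le_INR 2) in H1. simpl in H1. lra.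
  - apply Rnot_le_lt. intros Hle. pose proof (Fs_mono 1 a0 Hle). pose proof Fs_1. lra.
Qed.

Definition mE := INR (length AL).
Definition dE := ln mE / ln (INR q).

Lemma mE_bounds : 2 <= mE < INR q.
Proof.
  unfold mE. split.
  - pose proof AL_len2. apply (le_INR 2) in H. simpl in H. lra.
  - apply lt_INR. pose proof AL_lenq. lia.
Qed.

Lemma dE_bounds : 0 < dE < 1.
Proof.
  pose proof mE_bounds. assert (0 < ln mE) by (rewrite <- ln_1; apply ln_increasing; lra).
  assert (ln mE < ln (INR q)) by (apply ln_increasing; lra). unfold dE. split.
  - apply Rdiv_lt_0_compat; lra.
  - apply (Rmult_lt_reg_r (ln (INR q))); [lra|]. unfold Rdiv. rewrite Rmult_assoc, Rinv_l by lra. lra.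
Qed.

Lemma wt_1_dE : wt q 1 dE = / mE.
Proof.
  pose proof mE_bounds. assert (0 < ln mE) by (rewrite <- ln_1; apply ln_increasing; lra).
  assert (0 < ln (INR q)) by (rewrite <- ln_1; apply ln_increasing; lra).
  unfold wt, dE, Q.
  match goal with |- exp ?e = _ => replace e with (- ln mE) by (simpl INR; field; lra) end.
  rewrite exp_Ropp, exp_ln by lra. reflexivity.
Qed.

Lemma E_weight : lsum (fun a => wt q (lE a) dE) AL = 1.
Proof.
  unfold lE. rewrite wt_1_dE. transitivity (/ mE * lsum (fun _ => 1) AL).
  - rewrite <- lsum_scal. apply lsum_ext. intros; ring.
  - rewrite lsum_one. fold mE. pose proof mE_bounds. field. lra.
Qed.

Lemma lsum_lt_some {T} (f h : T -> R) L : (forall x, In x L -> f x <= h x) -> (exists x, In x L /\ f x < h x) ->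
  lsum f L < lsum h L.
Proof.
  induction L as [|a L IH]; intros H1 [x [Hx Hfx]]; [contradiction|]. simpl.
  destruct Hx as [<-|Hx].
  - assert (lsum f L <= lsum h L) by (apply lsum_le; intros; apply H1; right; auto). lra.
  - assert (lsum f L < lsum h L) by (apply IH; [intros; apply H1; right; auto| exists x; auto]).
    pose proof (H1 a (or_introl eq_refl)). lra.
Qed.

Lemma a0_lt_dE a0 : lsum (fun p => wt q (lD p) a0) AL = 1 -> a0 < dE.
Proof.
  intros H. change (Fs a0 = 1) in H.
  assert (HF : Fs dE < 1).
  { rewrite <- E_weight. unfold Fs, lE. apply lsum_lt_some.
    - intros p Hp. apply AL_bounds in Hp. unfold wt. apply exp_le_mono.
      pose proof dE_bounds. pose proof (lnQ_pos q hq2). assert (1 <= INR p) by (apply (le_INR 1); lia).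
      simpl INR. assert (0 < dE * ln (Q q)) by nra. nra.
    - destruct AL_two as [p1 [p2 [_ [Hp2 [_ H2]]]]]. exists p2. split; auto.
      unfold wt. apply exp_increasing.
      pose proof dE_bounds. pose proof (lnQ_pos q hq2). assert (2 <= INR p2) by (apply (le_INR 2); lia).
      simpl INR. assert (0 < dE * ln (Q q)) by nra. nra. }
  apply Rnot_le_lt. intros Hle. pose proof (Fs_mono dE a0 Hle). lra.
Qed.

Lemma lD_le : forall a, In a AL -> (lD a <= q)%nat.
Proof. intros a Ha. apply AL_bounds in Ha. unfold lD. lia. Qed.
Lemma lE_pos : forall a, In a AL -> (1 <= lE a)%nat.
Proof. intros. unfold lE. lia. Qed.
Lemma lE_le : forall a, In a AL -> (lE a <= 1)%nat.
Proof. intros. unfold lE. lia. Qed.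

Lemma main_sec :
  (uncountable (Dh q u) /\ perfect (Dh q u) /\ nowhere_dense (Dh q u) /\
   leb_null (Dh q u) /\ self_similar (Dh q u) /\
   (exists a0, dim_eq q u a0) /\
   (forall a0, dim_eq q u a0 -> hausdorff_dim (Dh q u) a0)) /\
  (self_similar (Eh q u) /\
   hausdorff_dim (Eh q u) (ln (INR (card_Theta q u)) / ln (INR q))) /\
  (forall d1 d2, hausdorff_dim (Dh q u) d1 -> hausdorff_dim (Eh q u) d2 -> d1 <> d2).
Proof.
  pose proof hq2 as H2.
  destruct a0_exists as [a0 Ha0]. pose proof (a0_bounds a0 Ha0) as [Ha0p Ha01].
  assert (HGq : 0 <= INR q) by apply pos_INR.
  assert (Hcard : ln (INR (card_Theta q u)) / ln (INR q) = dE) by reflexivity.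
  assert (HdimE : hausdorff_dim (Eh q u) dE).
  { rewrite Eh_eq. unfold XE. pose proof dE_bounds.
    apply (Xs_dim q H2 AL AL_nd AL_ne lE lE_pos 1 lE_le gE gE_inj (INR q) HGq gE_bd 0 dE E_weight); lra. }
  assert (HdimD : forall a, dim_eq q u a -> hausdorff_dim (Dh q u) a).
  { intros a Ha. apply dim_eq_iff in Ha. pose proof (a0_bounds a Ha).
    rewrite Dh_eq. unfold XD.
    apply (Xs_dim q H2 AL AL_nd AL_ne lD lD_pos q lD_le gD gD_inj (INR q) HGq gD_bd c0D a Ha); lra. }
  split; [|split].
  - rewrite Dh_eq. unfold XD. split; [|split; [|split; [|split; [|split]]]].
    + apply (Xs_uncountable q H2 AL AL_nd lD lD_pos q lD_le gD gD_inj (INR q) HGq gD_bd c0D a0 Ha0 Ha0p).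
    + apply (Xs_perfect q H2 AL AL_nd AL_ne lD lD_pos q lD_le gD gD_inj (INR q) HGq gD_bd c0D a0 Ha0 Ha0p).
    + apply (Xs_nowhere q H2 AL AL_ne lD lD_pos gD (INR q) HGq gD_bd c0D a0 Ha0 Ha01).
    + apply (Xs_leb_null q H2 AL AL_ne lD lD_pos gD (INR q) HGq gD_bd c0D a0 Ha0 Ha01).
    + apply (Xs_selfsim q H2 AL AL_ne lD lD_pos gD (INR q) HGq gD_bd c0D).
    + split; [exists a0; apply dim_eq_iff; auto|]. intros a Ha. pose proof (HdimD a Ha) as HH.
      rewrite Dh_eq in HH. exact HH.
  - split; [|rewrite Hcard; auto].
    rewrite Eh_eq. apply (Xs_selfsim q H2 AL AL_ne lE lE_pos gE (INR q) HGq gE_bd 0).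
  - intros d1 d2 Hd1 Hd2.
    assert (d1 = a0) by (apply (dim_unique (Dh q u)); auto; apply HdimD; apply dim_eq_iff; auto).
    assert (d2 = dE) by (apply (dim_unique (Eh q u)); auto).
    pose proof (a0_lt_dE a0 Ha0). lra.
Qed.

End Main.

Theorem theorem3p1 (q u : nat) (hq : (3 < q)%nat) (hu : (u < q)%nat) :
  (* (a) *)
  (uncountable (Dh q u) /\ perfect (Dh q u) /\ nowhere_dense (Dh q u) /\
   leb_null (Dh q u) /\ self_similar (Dh q u) /\
   (exists a0, dim_eq q u a0) /\
   (forall a0, dim_eq q u a0 -> hausdorff_dim (Dh q u) a0)) /\
  (* (b) *)
  (self_similar (Eh q u) /\
   hausdorff_dim (Eh q u) (ln (INR (card_Theta q u)) / ln (INR q))) /\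
  (* (c) *)
  (forall d1 d2, hausdorff_dim (Dh q u) d1 -> hausdorff_dim (Eh q u) d2 -> d1 <> d2).
Proof.
  apply main_sec; auto.
Qed.
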